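(* Let $\mathcal{I}$ be a suitable and well-separated collection of pairwise disjoint intervals in $\mathbb{R}/2\pi\mathbb{Z}$, and let $\alpha:\mathcal{I}\to\{-1,1\}$ be a symmetric colouring with $\hat\varepsilon\in[-1,1]^{S_o}$. Then $|\hat s_\alpha(\theta)|\ge\frac{2K\sqrt{n}}{3}$ for every $\theta\in\bigcup_{I\in\mathcal{I}}I$, and $|\hat s_\alpha(\theta)|\le5K\sqrt{n}$ for every $\theta\in\mathbb{R}$.
   Context: Standing setup: $n$ is a sufficiently large positive integer, $t$ is an odd integer such that $\gamma:=(2^{t+11}+2^t-1)/n$ satisfies $2^{-43}<\gamma\le2^{-40}$. A collection $\mathcal{I}$ of pairwise disjoint intervals in $\mathbb{R}/2\pi\mathbb{Z}$ is suitable if (a) endpoints of each interval lie in $\frac{\pi}{n}\mathbb{Z}$; (b) $\mathcal{I}$ is invariant under $\theta\mapsto\pi+\theta$ and $\theta\mapsto\pi-\theta$; (c) $|\mathcal{I}|=4N$ for some integer $N\le\gamma n$. It is well-separated if moreover (d) $|I|\le6\pi/n$ for each $I\in\mathcal{I}$; (e) $d(I,J)\ge\pi/n$ for distinct $I,J\in\mathcal{I}$ (distance mod $2\pi$, infimum over points); (f) $\bigcup_{I\in\mathcal{I}}I$ is disjoint from $(\pi/2)\mathbb{Z}+[-100\pi/n,100\pi/n]$. A colouring $\alpha:\mathcal{I}\to\{-1,1\}$ is symmetric if $\alpha(I')=\alpha(I)$ whenever $I'=\pi-I$ and $\alpha(I')=-\alpha(I)$ whenever $I'=\pi+I$. Let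 $S_o:=\{1,3,\dots,2n-1\}$, $K:=2^7$, $g_\alpha(\theta):=\sum_{I\in\mathcal{I}}\alpha(I)\mathbf{1}[\theta\in I]$, $\hat\varepsilon_j:=K\sqrt{n}\int_{-\pi}^{\pi}g_\alpha(\theta)\sin(j\theta)\,d\theta$ for $j\in S_o$, and $\hat s_\alpha(\theta):=\sum_{j\in S_o}\hat\varepsilon_j\sin(j\theta)$. *)

(* Defs.v *)
From Stdlib Require Import Reals Lra Lia ZArith ClassicalDescription.
From Coquelicot Require Import Coquelicot.
Open Scope R_scope.

Fixpoint rsum (f : nat -> R) (m : nat) : R :=
  match m with O => 0 | S m' => rsum f m' + f m' end.

Definition ind (P : Prop) : R :=
  if excluded_middle_informative P then 1 else 0.

(* The closed arc [a*pi/n, b*pi/n] of R/2piZ, viewed as a 2pi-periodic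
   subset of R (endpoints are in (pi/n)Z by construction). *)
Definition arc (n : nat) (a b : Z) (th : R) : Prop :=
  exists k : Z, IZR a * PI / INR n <= th + 2 * PI * IZR k <= IZR b * PI / INR n.

(* A collection of m intervals, the i-th (i < m) being arc n (lo i) (hi i). *)
Definition Ival (n : nat) (lo hi : nat -> Z) (i : nat) (th : R) : Prop :=
  arc n (lo i) (hi i) th.

Definition K : R := 2 ^ 7.

Definition gamma (n : nat) (t : Z) : R :=
  (powerRZ 2 (t + 11) + powerRZ 2 t - 1) / INR n.

Definition suitable (n : nat) (t : Z) (m : nat) (lo hi : nat -> Z) : Prop :=
  (* genuine (nondegenerate, proper) arcs with endpoints in (pi/n)Z *)
  (forall i, (i < m)%nat -> (lo i < hi i)%Z /\ (hi i - lo i < 2 * Z.of_nat n)%Z) /\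
  (forall i j, (i < m)%nat -> (j < m)%nat -> i <> j ->
     forall th, ~ (Ival n lo hi i th /\ Ival n lo hi j th)) /\
  (forall i, (i < m)%nat -> exists j, (j < m)%nat /\
     forall th, Ival n lo hi j th <-> Ival n lo hi i (th - PI)) /\
  (forall i, (i < m)%nat -> exists j, (j < m)%nat /\
     forall th, Ival n lo hi j th <-> Ival n lo hi i (PI - th)) /\
  (exists N : nat, m = (4 * N)%nat /\ INR N <= gamma n t * INR n).

Definition well_separated (n : nat) (t : Z) (m : nat) (lo hi : nat -> Z) : Prop :=
  suitable n t m lo hi /\
  (forall i, (i < m)%nat -> IZR (hi i - lo i) * PI / INR n <= 6 * PI / INR n) /\
  (forall i j, (i < m)%nat -> (j < m)%nat -> i <> j ->
     forall x y, Ival n lo hi i x -> Ival n lo hi j y ->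
     forall k : Z, PI / INR n <= Rabs (x - y + 2 * PI * IZR k)) /\
  (forall i, (i < m)%nat -> forall th, Ival n lo hi i th ->
     forall k : Z, ~ (Rabs (th - IZR k * PI / 2) <= 100 * PI / INR n)).

Definition colouring (m : nat) (alpha : nat -> R) : Prop :=
  forall i, (i < m)%nat -> alpha i = 1 \/ alpha i = -1.

Definition symmetric_colouring (n m : nat) (lo hi : nat -> Z) (alpha : nat -> R) : Prop :=
  colouring m alpha /\
  (forall i j, (i < m)%nat -> (j < m)%nat ->
     (forall th, Ival n lo hi j th <-> Ival n lo hi i (PI - th)) -> alpha j = alpha i) /\
  (forall i j, (i < m)%nat -> (j < m)%nat ->
     (forall th, Ival n lo hi j th <-> Ival n lo hi i (th - PI)) -> alpha j = - alpha i).

Definition g_alpha (n m : nat) (lo hi : nat -> Z) (alpha : nat -> R) (th : R) : R :=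
  rsum (fun i => alpha i * ind (Ival n lo hi i th)) m.

Definition eps_hat (n m : nat) (lo hi : nat -> Z) (alpha : nat -> R) (j : nat) : R :=
  K * sqrt (INR n) *
  RInt (fun th => g_alpha n m lo hi alpha th * sin (INR j * th)) (- PI) PI.

(* S_o = {1,3,...,2n-1}, enumerated as j = 2l+1, l < n. *)
Definition s_hat (n m : nat) (lo hi : nat -> Z) (alpha : nat -> R) (th : R) : R :=
  rsum (fun l => eps_hat n m lo hi alpha (2 * l + 1) * sin (INR (2 * l + 1) * th)) n.

(* Main.v *)
Require Import Defs.
From Stdlib Require Import Reals ZArith.
From Coquelicot Require Import Coquelicot.
From Stdlib Require Import Lra Lia ClassicalDescription Machin FunctionalExtensionality IndefiniteDescription.
Open Scope R_scope.


Definition RI (f : R -> R) (a b : R) : R := RInt f a b.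

Lemma ind_T (P : Prop) : P -> Defs.ind P = 1.
Proof. intro H; unfold Defs.ind; destruct (excluded_middle_informative P); tauto. Qed.
Lemma ind_F (P : Prop) : ~ P -> Defs.ind P = 0.
Proof. intro H; unfold Defs.ind; destruct (excluded_middle_informative P); tauto. Qed.
Lemma ind_01 (P : Prop) : Defs.ind P = 0 \/ Defs.ind P = 1.
Proof. unfold Defs.ind; destruct (excluded_middle_informative P); auto. Qed.
Lemma ind_iff (P Q : Prop) : (P <-> Q) -> Defs.ind P = Defs.ind Q.
Proof. intro H; unfold Defs.ind; destruct (excluded_middle_informative P);
  destruct (excluded_middle_informative Q); tauto. Qed.

Lemma EX_ext (f g : R -> R) (a b : R) : (forall x, Rmin a b < x < Rmax a b -> f x = g x) ->
  ex_RInt f a b -> ex_RInt g a b.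
Proof. intros; exact (ex_RInt_ext f g a b H H0). Qed.
Lemma RI_ext (f g : R -> R) (a b : R) : (forall x, Rmin a b < x < Rmax a b -> f x = g x) ->
  RI f a b = RI g a b.
Proof. intros; exact (RInt_ext f g a b H). Qed.

Lemma RI_plus (f : R -> R) (g : R -> R) (a : R) (b : R) : ex_RInt f a b -> ex_RInt g a b ->
  RI (fun x => f x + g x) a b = RI f a b + RI g a b.
Proof. intros; exact (RInt_plus f g a b H H0). Qed.
Lemma RI_minus (f : R -> R) (g : R -> R) (a : R) (b : R) : ex_RInt f a b -> ex_RInt g a b ->
  RI (fun x => f x - g x) a b = RI f a b - RI g a b.
Proof. intros; exact (RInt_minus f g a b H H0). Qed.
Lemma RI_scal (f : R -> R) (c : R) (a : R) (b : R) : ex_RInt f a b ->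
  RI (fun x => c * f x) a b = c * RI f a b.
Proof. intros; exact (RInt_scal f a b c H). Qed.
Lemma RI_chasles (f : R -> R) (a : R) (b : R) (c : R) : ex_RInt f a b -> ex_RInt f b c ->
  RI f a b + RI f b c = RI f a c.
Proof. intros; exact (RInt_Chasles f a b c H H0). Qed.
Lemma RI_swap (f : R -> R) (a : R) (b : R) : ex_RInt f a b -> RI f b a = - RI f a b.
Proof. intros; unfold RI; rewrite <- (opp_RInt_swap f a b H); reflexivity. Qed.
Lemma RI_point (f : R -> R) (a : R) : RI f a a = 0.
Proof. exact (RInt_point a f). Qed.
Lemma RI_const (c : R) (a : R) (b : R) : RI (fun _ => c) a b = (b - a) * c.
Proof. exact (RInt_const a b c). Qed.
Lemma EX_plus (f : R -> R) (g : R -> R) (a : R) (b : R) : ex_RInt f a b -> ex_RInt g a b -> ex_RInt (fun x => f x + g x) a b.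
Proof. intros; exact (ex_RInt_plus f g a b H H0). Qed.
Lemma EX_minus (f : R -> R) (g : R -> R) (a : R) (b : R) : ex_RInt f a b -> ex_RInt g a b -> ex_RInt (fun x => f x - g x) a b.
Proof. intros; exact (ex_RInt_minus f g a b H H0). Qed.
Lemma EX_scal (f : R -> R) (c : R) (a : R) (b : R) : ex_RInt f a b -> ex_RInt (fun x => c * f x) a b.
Proof. intros; exact (ex_RInt_scal f a b c H). Qed.
Lemma EX_const (c : R) (a : R) (b : R) : ex_RInt (fun _ => c) a b.
Proof. apply ex_RInt_const. Qed.

Lemma RI_lin (f : R -> R) (u : R) (v : R) (a : R) (b : R) : ex_RInt f (u * a + v) (u * b + v) ->
  RI (fun y => u * f (u * y + v)) a b = RI f (u * a + v) (u * b + v).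
Proof. intros; exact (RInt_comp_lin f u v a b H). Qed.
Lemma EX_lin (f : R -> R) (u : R) (v : R) (a : R) (b : R) : ex_RInt f (u * a + v) (u * b + v) ->
  ex_RInt (fun y => u * f (u * y + v)) a b.
Proof. intros; exact (ex_RInt_comp_lin f u v a b H). Qed.

Lemma RI_shift (f : R -> R) (v : R) (a : R) (b : R) : ex_RInt f (a + v) (b + v) ->
  RI (fun y => f (y + v)) a b = RI f (a + v) (b + v).
Proof.
  intros H. assert (H' : ex_RInt f (1 * a + v) (1 * b + v)) by (now rewrite !Rmult_1_l).
  rewrite <- (Rmult_1_l a) at 2. rewrite <- (Rmult_1_l b) at 2.
  rewrite <- (RI_lin f 1 v a b H'). apply RI_ext; intros; rewrite !Rmult_1_l; auto.
Qed.
Lemma EX_shift (f : R -> R) (v : R) (a : R) (b : R) : ex_RInt f (a + v) (b + v) -> ex_RInt (fun y => f (y + v)) a b.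
Proof.
  intros H. assert (H' : ex_RInt f (1 * a + v) (1 * b + v)) by (now rewrite !Rmult_1_l).
  apply (EX_ext (fun y => 1 * f (1 * y + v))).
  intros; rewrite !Rmult_1_l; auto. apply EX_lin; auto.
Qed.
Lemma RI_refl (f : R -> R) (v : R) (a : R) (b : R) : ex_RInt f (v - a) (v - b) ->
  RI (fun y => f (v - y)) a b = RI f (v - b) (v - a).
Proof.
  intros H. assert (H' : ex_RInt f (-1 * a + v) (-1 * b + v)).
  { replace (-1 * a + v) with (v - a) by ring. replace (-1*b+v) with (v-b) by ring. auto. }
  pose proof (RI_lin f (-1) v a b H') as E.
  replace (-1 * a + v) with (v - a) in E by ring. replace (-1*b+v) with (v-b) in E by ring.
  rewrite (RI_swap f (v - a) (v - b) H). rewrite <- E.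
  assert (E2 : RI (fun y => -1 * f (-1 * y + v)) a b = -1 * RI (fun y => f (v - y)) a b).
  { rewrite <- RI_scal.
    - apply RI_ext; intros. replace (-1 * x + v) with (v - x) by ring. reflexivity.
    - apply (EX_ext (fun y => -1 * (-1 * f (-1 * y + v)))).
      intros x _. replace (-1 * x + v) with (v - x) by ring. ring.
      apply EX_scal, EX_lin; auto. }
  rewrite E2. ring.
Qed.
Lemma EX_refl (f : R -> R) (v : R) (a : R) (b : R) : ex_RInt f (v - a) (v - b) -> ex_RInt (fun y => f (v - y)) a b.
Proof.
  intros H. assert (H' : ex_RInt f (-1 * a + v) (-1 * b + v)).
  { replace (-1 * a + v) with (v - a) by ring. replace (-1*b+v) with (v-b) by ring. auto. }
  apply (EX_ext (fun y => -1 * (-1 * f (-1 * y + v)))).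
  intros; (replace (-1 * x + v) with (v - x) by ring); ring.
  apply EX_scal, EX_lin; auto.
Qed.

Lemma RI_le (f : R -> R) (g : R -> R) (a : R) (b : R) : a <= b -> ex_RInt f a b -> ex_RInt g a b ->
  (forall x, a < x < b -> f x <= g x) -> RI f a b <= RI g a b.
Proof. intros; apply RInt_le; auto. Qed.

Lemma RI_abs_le (f : R -> R) (g : R -> R) (a : R) (b : R) : a <= b -> ex_RInt f a b -> ex_RInt g a b ->
  (forall x, a < x < b -> Rabs (f x) <= g x) -> Rabs (RI f a b) <= RI g a b.
Proof.
  intros. apply Rabs_le; split.
  - assert (E : RI (fun x => -1 * g x) a b = -1 * RI g a b) by (apply RI_scal; auto).
    assert (RI (fun x => -1 * g x) a b <= RI f a b).
    { apply RI_le; auto. apply EX_scal; auto.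
      intros x Hx; specialize (H2 x Hx). apply Rabs_le_between in H2. lra. }
    lra.
  - apply RI_le; auto. intros x Hx; specialize (H2 x Hx). apply Rabs_le_between in H2. lra.
Qed.

Lemma RI_FTC (F : R -> R) (f : R -> R) (a : R) (b : R) : a <= b ->
  (forall x, a <= x <= b -> is_derive F x (f x)) ->
  (forall x, a <= x <= b -> continuous f x) ->
  RI f a b = F b - F a /\ ex_RInt f a b.
Proof.
  intros Hab Hd Hc.
  assert (H : @is_RInt R_CompleteNormedModule f a b (minus (F b) (F a))).
  { apply (@is_RInt_derive R_CompleteNormedModule); intros x Hx; rewrite Rmin_left, Rmax_right in Hx by auto; auto. }
  split. apply (@is_RInt_unique R_CompleteNormedModule) in H. unfold RI; rewrite H. reflexivity.
  exists (minus (F b) (F a)); auto.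
Qed.

Lemma EX_cont (f : R -> R) (a : R) (b : R) : a <= b -> (forall x, a <= x <= b -> continuous f x) -> ex_RInt f a b.
Proof. intros; apply (@ex_RInt_continuous R_CompleteNormedModule); intros; rewrite Rmin_left, Rmax_right in H1 by auto; auto. Qed.


Lemma PI_bounds : 3.1415 < PI < 3.1416.
Proof.
  destruct (PI_2_3_7_ineq 3) as [H1 H2].
  unfold tg_alt, PI_2_3_7_tg, Ratan_seq in H1, H2.
  simpl sum_f_R0 in H1, H2. simpl INR in H1, H2. simpl pow in H1, H2.
  split; lra.
Qed.

Lemma rsum_S f m : rsum f (S m) = rsum f m + f m.
Proof. reflexivity. Qed.
Lemma rsum_0 f : rsum f 0 = 0.
Proof. reflexivity. Qed.

Definition Dk (n : nat) (x : R) : R := rsum (fun l => cos (INR (2 * l + 1) * x)) n.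
Definition k2 (n : nat) (x : R) : R := 2 * Dk n x.

Lemma C_plus (f g : R -> R) x : continuous f x -> continuous g x -> continuous (fun y => f y + g y) x.
Proof. intros; exact (continuous_plus f g x H H0). Qed.
Lemma C_mult (f g : R -> R) x : continuous f x -> continuous g x -> continuous (fun y => f y * g y) x.
Proof. intros; exact (continuous_mult f g x H H0). Qed.
Lemma C_const (c : R) x : continuous (fun _ : R => c) x.
Proof. apply continuous_const. Qed.
Lemma C_ext (f g : R -> R) x : (forall y, f y = g y) -> continuous f x -> continuous g x.
Proof. intros E H. replace g with f; auto. apply functional_extensionality; auto. Qed.

Lemma C_der (f : R -> R) x : ex_derive f x -> continuous f x.
Proof. intros; exact (@ex_derive_continuous R_AbsRing R_NormedModule f x H). Qed.

Lemma Dk_cont n x : continuous (Dk n) x.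
Proof.
  induction n.
  - apply (C_ext (fun _ => 0)). intros; reflexivity. apply C_const.
  - apply (C_ext (fun y => Dk n y + cos (INR (2 * n + 1) * y))).
    intros; reflexivity.
    apply C_plus; auto. apply C_der. auto_derive. auto.
Qed.
Lemma k2_cont n x : continuous (k2 n) x.
Proof. apply (C_ext (fun y => 2 * Dk n y)). intros; reflexivity. apply C_mult. apply C_const. apply Dk_cont. Qed.

Lemma Dk_sin n x : 2 * sin x * Dk n x = sin (2 * INR n * x).
Proof.
  induction n.
  - unfold Dk; simpl. replace (2 * 0 * x) with 0 by ring. rewrite sin_0. ring.
  - unfold Dk in *; rewrite rsum_S.
    replace (2 * sin x * (rsum (fun l : nat => cos (INR (2 * l + 1) * x)) n + cos (INR (2 * n + 1) * x)))
      with (2 * sin x * rsum (fun l : nat => cos (INR (2 * l + 1) * x)) n + 2 * sin x * cos (INR (2 * n + 1) * x)) by ring.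
    rewrite IHn.
    rewrite S_INR. rewrite plus_INR, mult_INR. replace (INR 2) with 2 by (simpl; ring). replace (INR 1) with 1 by reflexivity.
    replace (2 * (INR n + 1) * x) with ((2 * INR n + 1) * x + x) by ring.
    replace (2 * INR n * x) with ((2 * INR n + 1) * x - x) at 1 by ring.
    rewrite sin_plus, sin_minus. ring.
Qed.
Lemma k2_eq n x : sin x <> 0 -> k2 n x = sin (2 * INR n * x) / sin x.
Proof. intros. unfold k2. rewrite <- Dk_sin. field. auto. Qed.

Lemma Dk_even n x : Dk n (- x) = Dk n x.
Proof.
  unfold Dk; induction n. reflexivity. rewrite !rsum_S, IHn. f_equal.
  rewrite <- cos_neg. f_equal. ring.
Qed.
Lemma cos_odd_shift (l : nat) x : cos (INR (2 * l + 1) * (x + PI)) = - cos (INR (2 * l + 1) * x).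
Proof.
  rewrite plus_INR, mult_INR. replace (INR 2) with 2 by (simpl; ring). replace (INR 1) with 1 by reflexivity.
  replace ((2 * INR l + 1) * (x + PI)) with ((2 * INR l + 1) * x + PI + 2 * INR l * PI) by ring.
  rewrite cos_period. apply neg_cos.
Qed.
Lemma Dk_shift n x : Dk n (x + PI) = - Dk n x.
Proof.
  unfold Dk; induction n. rewrite !rsum_0; ring. rewrite !rsum_S, IHn, cos_odd_shift. ring.
Qed.

Ltac nzt H := repeat first [ exact I | progress split | apply Rmult_integral_contrapositive_currified | apply pow_nonzero | progress rewrite Rmult_1_r | exact H | lra ].

Definition Vf (N A x : R) : R := (A - cos (2 * N * x)) / (2 * N).
Definition Wf (N A x : R) : R := Vf N A x * cos x / (sin x) ^ 2.

Lemma lobe_ibp n A c d : (0 < n)%nat -> c <= d -> (forall x, c <= x <= d -> sin x <> 0) ->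
  RI (k2 n) c d = Vf (INR n) A d / sin d - Vf (INR n) A c / sin c + RI (Wf (INR n) A) c d
  /\ ex_RInt (Wf (INR n) A) c d.
Proof.
  intros Hn Hcd Hs. set (N := INR n).
  assert (HN : 0 < N) by (apply lt_0_INR; lia).
  set (G := fun y => Vf N A y / sin y).
  set (g := fun y => sin (2 * N * y) / sin y - Wf N A y).
  assert (Hg : forall x, c <= x <= d -> continuous g x).
  { intros x Hx. apply C_der. unfold g, Wf, Vf. auto_derive. specialize (Hs x Hx). nzt Hs. }
  assert (HW : ex_RInt (Wf N A) c d).
  { apply EX_cont; auto. intros x Hx. apply C_der. unfold Wf, Vf. auto_derive.
    specialize (Hs x Hx). nzt Hs. }
  destruct (RI_FTC G g c d Hcd) as [E1 E2].
  { intros x Hx. unfold G, g, Wf, Vf. auto_derive. apply Hs; auto. specialize (Hs x Hx). field. nzt Hs. }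
  auto.
  split; auto.
  assert (E3 : RI (k2 n) c d = RI (fun y => g y + Wf N A y) c d).
  { apply RI_ext. intros x Hx. rewrite Rmin_left, Rmax_right in Hx by auto.
    unfold g. rewrite k2_eq. fold N. ring. apply Hs; lra. }
  rewrite E3, RI_plus, E1 by auto. unfold G. ring.
Qed.

Lemma lobe_far n c d : (0 < n)%nat -> c <= d -> (forall x, c <= x <= d -> sin x <> 0) ->
  cos (2 * INR n * c) = cos (2 * INR n * d) ->
  Rabs (RI (k2 n) c d) <= / INR n * RI (fun x => / (sin x) ^ 2) c d
  /\ ex_RInt (fun x => / (sin x) ^ 2) c d.
Proof.
  intros Hn Hcd Hs Hcos. set (N := INR n) in *.
  assert (HN : 0 < N) by (apply lt_0_INR; lia).
  destruct (lobe_ibp n (cos (2 * N * c)) c d Hn Hcd Hs) as [E HW]. fold N in E, HW.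
  assert (HI : ex_RInt (fun x => / (sin x) ^ 2) c d).
  { apply EX_cont; auto. intros x Hx. apply C_der. auto_derive.
    specialize (Hs x Hx). nzt Hs. }
  split; auto.
  rewrite E. unfold Vf.
  assert (Z1 : cos (2 * N * c) - cos (2 * N * d) = 0) by (rewrite Hcos; ring).
  assert (Z2 : cos (2 * N * c) - cos (2 * N * c) = 0) by ring.
  rewrite Z1, Z2.
  replace (0 / (2 * N) / sin d - 0 / (2 * N) / sin c + RI (Wf N (cos (2 * N * c))) c d)
    with (RI (Wf N (cos (2 * N * c))) c d) by (unfold Rdiv; ring).
  rewrite <- RI_scal by auto.
  apply RI_abs_le; auto. apply EX_scal; auto.
  intros x Hx. unfold Wf, Vf.
  assert (Hsx : sin x <> 0) by (apply Hs; lra).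
  assert (P2 : 0 < sin x ^ 2) by (apply pow2_gt_0; auto).
  pose proof (COS_bound (2 * N * c)) as B1. pose proof (COS_bound (2 * N * x)) as B2.
  pose proof (COS_bound x) as B3.
  rewrite Rabs_div by (apply Rgt_not_eq; auto). rewrite (Rabs_pos_eq (sin x ^ 2)) by lra.
  unfold Rdiv. apply Rmult_le_compat_r. left; apply Rinv_0_lt_compat; auto.
  rewrite Rabs_mult. rewrite <- (Rmult_1_r (/ N)). apply Rmult_le_compat; try apply Rabs_pos.
  rewrite Rabs_mult. rewrite Rabs_inv. rewrite (Rabs_pos_eq (2 * N)) by lra.
  apply Rle_trans with (2 * / (2 * N)).
  apply Rmult_le_compat_r. left; apply Rinv_0_lt_compat; lra.
  apply Rabs_le; lra. right; field; lra.
  apply Rabs_le; lra.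
Qed.

Lemma EX_k2 n a b : ex_RInt (k2 n) a b.
Proof.
  destruct (Rle_dec a b). apply EX_cont; auto. intros; apply k2_cont.
  apply ex_RInt_swap. apply EX_cont. lra. intros; apply k2_cont.
Qed.

Lemma lobe_up n a y : (0 < n)%nat -> 0 < a -> a <= y -> y <= PI / 2 ->
  cos (2 * INR n * a) = 1 ->
  0 <= RI (k2 n) a y <= / INR n * / sin a.
Proof.
  intros Hn Ha Hay Hy Hc. set (N := INR n) in *.
  assert (HN : 0 < N) by (apply lt_0_INR; lia).
  assert (Hsp : forall x, a <= x <= y -> 0 < sin x).
  { intros x Hx. apply sin_gt_0; lra. }
  assert (Hs : forall x, a <= x <= y -> sin x <> 0).
  { intros x Hx. specialize (Hsp x Hx). lra. }
  destruct (lobe_ibp n 1 a y Hn Hay Hs) as [E HW]. fold N in E, HW.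
  assert (Va : Vf N 1 a = 0). { unfold Vf. rewrite Hc. field. lra. }
  rewrite Va in E.
  assert (Hcs : forall x, a <= x <= y -> 0 <= cos x).
  { intros x Hx. apply cos_ge_0; lra. }
  assert (HV : forall x, 0 <= Vf N 1 x <= / N).
  { intros x. unfold Vf. pose proof (COS_bound (2 * N * x)). split.
    apply Rmult_le_pos. lra. left; apply Rinv_0_lt_compat; lra.
    apply Rle_trans with (2 / (2 * N)). unfold Rdiv. apply Rmult_le_compat_r.
    left; apply Rinv_0_lt_compat; lra. lra. right; field; lra. }
  destruct (RI_FTC (fun x => - / sin x) (fun x => cos x / (sin x) ^ 2) a y Hay) as [E2 H2].
  { intros x Hx. specialize (Hs x Hx). auto_derive. auto. field. auto. }
  { intros x Hx. specialize (Hs x Hx). apply C_der. auto_derive. nzt Hs. }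
  assert (Hsy : 0 < sin y) by (apply Hsp; lra). assert (Hsa : 0 < sin a) by (apply Hsp; lra).
  assert (L1 : 0 <= RI (Wf N 1) a y).
  { replace 0 with (RI (fun _ => 0) a y) by (rewrite RI_const; ring).
    apply RI_le; auto. apply EX_const. intros x Hx. unfold Wf.
    assert (0 < sin x) by (apply Hsp; lra).
    destruct (HV x). assert (0 <= cos x) by (apply Hcs; lra).
    apply Rmult_le_pos. apply Rmult_le_pos; auto. left; apply Rinv_0_lt_compat. apply pow_lt; auto. }
  assert (L2 : RI (Wf N 1) a y <= / N * (- / sin y - - / sin a)).
  { rewrite <- E2, <- RI_scal by auto. apply RI_le; auto. apply EX_scal; auto.
    intros x Hx. unfold Wf.
    assert (0 < sin x) by (apply Hsp; lra).
    destruct (HV x). assert (0 <= cos x) by (apply Hcs; lra).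
    assert (0 < sin x ^ 2) by (apply pow_lt; auto).
    unfold Rdiv. rewrite <- Rmult_assoc. apply Rmult_le_compat_r. left; apply Rinv_0_lt_compat; auto.
    apply Rmult_le_compat_r; auto. }
  assert (L3 : 0 <= Vf N 1 y / sin y <= / N * / sin y).
  { destruct (HV y). split. unfold Rdiv; apply Rmult_le_pos; auto. left; apply Rinv_0_lt_compat; auto.
    unfold Rdiv. apply Rmult_le_compat_r; auto. left; apply Rinv_0_lt_compat; auto. }
  rewrite E. split. unfold Rdiv at 2. rewrite Rmult_0_l. lra.
  unfold Rdiv at 2. rewrite Rmult_0_l. nra.
Qed.

Definition Phi n y := RI (k2 n) 0 y.

Lemma Phi_split n a y : Phi n y = Phi n a + RI (k2 n) a y.
Proof. unfold Phi. rewrite RI_chasles; auto; apply EX_k2. Qed.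

Lemma mul_le_div c x P : 0 < c -> x <= P / c -> c * x <= P.
Proof. intros. apply Rmult_le_compat_l with (r := c) in H0; [|lra]. replace (c * (P / c)) with P in H0 by (field; lra). auto. Qed.
Lemma div_le_mul c x P : 0 < c -> P / c <= x -> P <= c * x.
Proof. intros. apply Rmult_le_compat_l with (r := c) in H0; [|lra]. replace (c * (P / c)) with P in H0 by (field; lra). auto. Qed.

Lemma k2_pos n x : (4 <= n)%nat -> 0 < x <= PI / (2 * INR n) -> 0 <= k2 n x.
Proof.
  intros Hn Hx. assert (HN : 4 <= INR n) by (replace 4 with (INR 4) by (simpl; ring); apply le_INR; lia).
  pose proof PI_bounds.
  assert (x <= PI / 8). { apply Rle_trans with (1 := proj2 Hx). unfold Rdiv. apply Rmult_le_compat_l. lra.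
    apply Rinv_le_contravar; lra. }
  assert (0 < sin x) by (apply sin_gt_0; lra).
  rewrite k2_eq by lra. unfold Rdiv. apply Rmult_le_pos. apply sin_ge_0. nra.
  apply mul_le_div; lra. left; apply Rinv_0_lt_compat; auto.
Qed.

Lemma k2_neg n x : (4 <= n)%nat -> PI / (2 * INR n) <= x <= PI / INR n -> k2 n x <= 0.
Proof.
  intros Hn Hx. assert (HN : 4 <= INR n) by (replace 4 with (INR 4) by (simpl; ring); apply le_INR; lia).
  pose proof PI_bounds.
  assert (x <= PI / 4). { apply Rle_trans with (1 := proj2 Hx). unfold Rdiv. apply Rmult_le_compat_l. lra.
    apply Rinv_le_contravar; lra. }
  assert (0 < PI / (2 * INR n)) by (apply Rdiv_lt_0_compat; lra).
  assert (0 < sin x) by (apply sin_gt_0; lra).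
  rewrite k2_eq by lra. unfold Rdiv. apply Rmult_le_0_r.
  apply sin_le_0.
  apply div_le_mul; lra.
  replace (2 * PI) with (2 * INR n * (PI / INR n)) by (field; lra). apply Rmult_le_compat_l; lra.
  left; apply Rinv_0_lt_compat; auto.
Qed.

Lemma RI_nonneg f a b : a <= b -> ex_RInt f a b -> (forall x, a < x < b -> 0 <= f x) -> 0 <= RI f a b.
Proof.
  intros. replace 0 with (RI (fun _ => 0) a b) by (rewrite RI_const; ring).
  apply RI_le; auto. apply EX_const.
Qed.
Lemma RI_nonpos f a b : a <= b -> ex_RInt f a b -> (forall x, a < x < b -> f x <= 0) -> RI f a b <= 0.
Proof.
  intros. replace 0 with (RI (fun _ => 0) a b) by (rewrite RI_const; ring).
  apply RI_le; auto. apply EX_const.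
Qed.

Lemma Phi_A n y : (4 <= n)%nat -> 0 <= y <= PI / (2 * INR n) -> 0 <= Phi n y <= Phi n (PI / (2 * INR n)).
Proof.
  intros Hn Hy. split.
  - apply RI_nonneg. lra. apply EX_k2. intros; apply k2_pos; auto; lra.
  - rewrite (Phi_split n y (PI / (2 * INR n))).
    assert (0 <= RI (k2 n) y (PI / (2 * INR n))). { apply RI_nonneg. lra. apply EX_k2. intros; apply k2_pos; auto; lra. }
    lra.
Qed.

Lemma Phi_B n y : (4 <= n)%nat -> PI / (2 * INR n) <= y <= PI / INR n ->
  Phi n (PI / INR n) <= Phi n y <= Phi n (PI / (2 * INR n)).
Proof.
  intros Hn Hy. split.
  - rewrite (Phi_split n y (PI / INR n)).
    assert (RI (k2 n) y (PI / INR n) <= 0). { apply RI_nonpos. lra. apply EX_k2. intros; apply k2_neg; auto; lra. }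
    lra.
  - rewrite (Phi_split n (PI / (2 * INR n)) y).
    assert (RI (k2 n) (PI / (2 * INR n)) y <= 0). { apply RI_nonpos. lra. apply EX_k2. intros; apply k2_neg; auto; lra. }
    lra.
Qed.

Lemma Phi_C n y : (4 <= n)%nat -> PI / INR n <= y <= PI / 2 ->
  Phi n (PI / INR n) <= Phi n y <= Phi n (PI / INR n) + / INR n * / sin (PI / INR n).
Proof.
  intros Hn Hy. assert (HN : 4 <= INR n) by (replace 4 with (INR 4) by (simpl; ring); apply le_INR; lia).
  pose proof PI_bounds.
  destruct (lobe_up n (PI / INR n) y) as [L U]; try lia; try lra.
  apply Rdiv_lt_0_compat; lra.
  replace (2 * INR n * (PI / INR n)) with (0 + 2 * INR 1 * PI) by (simpl; field; lra).
  rewrite cos_period, cos_0; auto.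
  rewrite (Phi_split n (PI / INR n) y). lra.
Qed.

Lemma sin_sin_D k phi th : rsum (fun l => sin (INR (2 * l + 1) * phi) * sin (INR (2 * l + 1) * th)) k
  = / 2 * (Dk k (th - phi) - Dk k (th + phi)).
Proof.
  unfold Dk. induction k. simpl. ring.
  rewrite !rsum_S, IHk.
  replace (INR (2 * k + 1) * (th - phi)) with (INR (2 * k + 1) * th - INR (2 * k + 1) * phi) by ring.
  replace (INR (2 * k + 1) * (th + phi)) with (INR (2 * k + 1) * th + INR (2 * k + 1) * phi) by ring.
  rewrite cos_minus, cos_plus. field.
Qed.


Lemma sin5_ub u : 0 <= u <= PI -> sin u <= u - u^3/6 + u^5/120.
Proof. intros. destruct (sin_bound u 0) as [_ H1]; try lra.
  unfold sin_approx, sin_term in H1. replace (2 * (0 + 1))%nat with 2%nat in H1 by reflexivity.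
  cbn [sum_f_R0] in H1; rewrite !INR_IZR_INZ in H1; cbn -[IZR sin Rmult Rplus Rdiv Ropp Rinv pow Rminus] in H1.
  lra. Qed.
Lemma sin7_lb u : 0 <= u <= PI -> u - u^3/6 + u^5/120 - u^7/5040 <= sin u.
Proof. intros. destruct (sin_bound u 1) as [H1 _]; try lra.
  unfold sin_approx, sin_term in H1. replace (2 * 1 + 1)%nat with 3%nat in H1 by reflexivity.
  cbn [sum_f_R0] in H1; rewrite !INR_IZR_INZ in H1; cbn -[IZR sin Rmult Rplus Rdiv Ropp Rinv pow Rminus] in H1.
  lra. Qed.
Lemma sin3_lb u : 0 <= u <= PI -> u - u^3/6 <= sin u.
Proof. intros. destruct (sin_bound u 0) as [H1 _]; try lra.
  unfold sin_approx, sin_term in H1. replace (2 * 0 + 1)%nat with 1%nat in H1 by reflexivity.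
  cbn [sum_f_R0] in H1; rewrite !INR_IZR_INZ in H1; cbn -[IZR sin Rmult Rplus Rdiv Ropp Rinv pow Rminus] in H1.
  lra. Qed.

Lemma inv_sin_ub y : 0 < y <= 1 -> / sin y <= / y + y / 3.
Proof.
  intros Hy. pose proof PI_bounds. pose proof (sin3_lb y ltac:(lra)).
  assert (Hs : 0 < sin y) by nra.
  apply Rmult_le_reg_l with (sin y); auto. rewrite Rinv_r by lra.
  assert (E : sin y * (/ y + y / 3) = sin y / y + sin y * y / 3) by (field; lra).
  rewrite E.
  assert (sin y / y >= 1 - y^2/6). { apply Rle_ge. apply (Rmult_le_reg_r y); [lra|].
    unfold Rdiv. rewrite Rmult_assoc, Rinv_l, Rmult_1_r by lra. nra. }
  assert (0 <= (sin y - (y - y^3/6)) * y) by (apply Rmult_le_pos; lra).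
  assert (0 <= y^2 * (3 - y^2)) by (apply Rmult_le_pos; nra).
  unfold Rdiv in *. nra.
Qed.

Definition p5 (u : R) := 1 - u^2/6 + u^4/120.
Definition p7 (u : R) := 1 - u^2/6 + u^4/120 - u^6/5040.
Definition q5 (u : R) := u - u^3/18 + u^5/600.
Definition q7 (u : R) := u - u^3/18 + u^5/600 - u^7/35280.

Section Num.
Variable n : nat.
Hypothesis Hn : (100 <= n)%nat.
Let N := INR n.
Let d := PI / (2 * N).

Lemma N_ge : 100 <= N.
Proof. unfold N. replace 100 with (INR 100) by (rewrite INR_IZR_INZ; reflexivity). apply le_INR; lia. Qed.
Lemma d_bounds : 0 < d <= 0.016.
Proof. pose proof N_ge. pose proof PI_bounds. unfold d. split. apply Rdiv_lt_0_compat; lra.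
  apply Rmult_le_reg_l with (2 * N). lra. replace (2 * N * (PI / (2 * N))) with PI by (field; lra). lra. Qed.
Lemma d_eq : 2 * N * d = PI.
Proof. pose proof N_ge. unfold d. field. lra. Qed.

Lemma pt_up1 x : 0 < x <= d -> k2 n x <= 2 * N * p5 (2 * N * x) + d / 3.
Proof.
  intros Hx. pose proof N_ge. pose proof d_bounds. pose proof d_eq. pose proof PI_bounds.
  set (u := 2 * N * x).
  assert (Hu : 0 < u <= PI) by (unfold u; nra).
  assert (Hsx : 0 < sin x) by (apply sin_gt_0; lra).
  rewrite k2_eq by lra. fold N u.
  pose proof (inv_sin_ub x ltac:(lra)) as I1.
  pose proof (sin5_ub u ltac:(lra)) as S1.
  assert (S0 : 0 <= sin u) by (apply sin_ge_0; lra). pose proof (SIN_bound u).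
  assert (E : u - u^3/6 + u^5/120 = x * (2 * N * p5 u)) by (unfold p5, u; field).
  unfold Rdiv. apply Rle_trans with (sin u * (/ x + x / 3)). apply Rmult_le_compat_l; auto.
  assert (sin u * / x <= 2 * N * p5 u).
  { apply Rmult_le_reg_r with x. lra. rewrite Rmult_assoc, Rinv_l by lra. nra. }
  assert (sin u * (x / 3) <= d / 3) by (unfold Rdiv; nra).
  nra.
Qed.

Lemma k2_shift x : sin (x + d) <> 0 -> k2 n (x + d) = - sin (2 * N * x) / sin (x + d).
Proof.
  intros Z. pose proof N_ge. rewrite k2_eq by auto. fold N.
  replace (2 * N * (x + d)) with (2 * N * x + PI) by (rewrite <- d_eq; ring).
  rewrite neg_sin. reflexivity.
Qed.

Lemma pt_lo2 x : 0 < x < d -> 2 * N * p7 (2 * N * x) - 2 * N * sin (2 * N * x) * (/ PI - (2 * N * x) / (2 * PI ^ 2)) - 2 * d / 3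
   <= k2 n x + k2 n (x + d).
Proof.
  intros Hx. pose proof N_ge. pose proof d_bounds. pose proof d_eq. pose proof PI_bounds.
  set (u := 2 * N * x).
  assert (Hu : 0 < u < PI) by (unfold u; nra).
  assert (Hsx : 0 < sin x) by (apply sin_gt_0; lra).
  assert (Hsxd : 0 < sin (x + d)) by (apply sin_gt_0; lra).
  rewrite k2_shift by lra. rewrite k2_eq by lra. fold N u.
  pose proof (inv_sin_ub (x + d) ltac:(lra)) as I1.
  pose proof (sin7_lb u ltac:(lra)) as S1.
  assert (S0 : 0 <= sin u) by (apply sin_ge_0; lra). pose proof (SIN_bound u).
  pose proof (sin_lt_x x ltac:(lra)) as Sx.
  assert (E : u - u^3/6 + u^5/120 - u^7/5040 = x * (2 * N * p7 u)) by (unfold p7, u; field).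
  assert (T1 : 2 * N * p7 u <= sin u / sin x).
  { apply Rle_trans with (sin u / x).
    - apply (Rmult_le_reg_r x); [lra|]. replace (sin u / x * x) with (sin u) by (field; lra). nra.
    - unfold Rdiv. apply Rmult_le_compat_l; auto. apply Rinv_le_contravar; lra. }
  assert (C1 : / (x + d) <= 2 * N * (/ PI - u / (2 * PI ^ 2))).
  { assert (Exd : x + d = (u + PI) / (2 * N)) by (unfold u; rewrite <- d_eq; field; lra).
    rewrite Exd. rewrite Rinv_div.
    unfold Rdiv at 1. apply Rmult_le_compat_l. lra.
    apply (Rmult_le_reg_r (u + PI)); [lra|]. rewrite Rinv_l by lra.
    replace ((/ PI - u / (2 * PI ^ 2)) * (u + PI)) with (1 + u * (PI - u) / (2 * PI^2)) by (field; lra).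
    assert (0 <= u * (PI - u) / (2 * PI^2)). { apply Rmult_le_pos. nra. left; apply Rinv_0_lt_compat; nra. }
    lra. }
  assert (T2 : - sin u * / (x + d) - 2 * d / 3 <= - sin u / sin (x + d)).
  { unfold Rdiv. rewrite Ropp_mult_distr_l_reverse.
    assert (sin u * / sin (x + d) <= sin u * (/ (x + d) + (x + d) / 3)) by (apply Rmult_le_compat_l; auto).
    assert (sin u * ((x + d) / 3) <= 2 * d / 3) by (unfold Rdiv; nra).
    nra. }
  assert (sin u * / (x + d) <= sin u * (2 * N * (/ PI - u / (2 * PI ^ 2)))) by (apply Rmult_le_compat_l; auto).
  nra.
Qed.

Lemma pt_up3 x : 0 < x < d -> k2 n x + k2 n (x + d) <= 2 * N * p5 (2 * N * x) + d / 3 - sin (2 * N * x) / (2 * d).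
Proof.
  intros Hx. pose proof N_ge. pose proof d_bounds. pose proof d_eq. pose proof PI_bounds.
  pose proof (pt_up1 x ltac:(lra)).
  set (u := 2 * N * x) in *.
  assert (Hu : 0 < u < PI) by (unfold u; nra).
  assert (Hsxd : 0 < sin (x + d)) by (apply sin_gt_0; lra).
  rewrite k2_shift by lra. fold N u.
  assert (S0 : 0 <= sin u) by (apply sin_ge_0; lra).
  pose proof (sin_lt_x (x + d) ltac:(lra)) as Sx.
  assert (sin u / (2 * d) <= sin u / sin (x + d)).
  { unfold Rdiv. apply Rmult_le_compat_l; auto. apply Rinv_le_contravar; lra. }
  unfold Rdiv in *. rewrite Ropp_mult_distr_l_reverse. lra.
Qed.
End Num.

Definition Fc (u : R) := - cos u / PI - (sin u - u * cos u) / (2 * PI ^ 2).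

Lemma Phi_d_ub n : (100 <= n)%nat ->
  Phi n (PI / (2 * INR n)) <= q5 PI + (PI / (2 * INR n)) ^ 2 / 3.
Proof.
  intros Hn. pose proof (N_ge n Hn) as HN. pose proof (d_bounds n Hn). pose proof (d_eq n Hn) as Hde.
  set (N := INR n) in *. set (d := PI / (2 * N)) in *.
  destruct (RI_FTC (fun x => q5 (2 * N * x) + d * x / 3) (fun x => 2 * N * p5 (2 * N * x) + d / 3) 0 d) as [E1 E2].
  lra. intros x _. unfold q5, p5. auto_derive. auto. field.
  intros x _. apply C_der. unfold p5. auto_derive. auto.
  unfold Phi. apply Rle_trans with (RI (fun x => 2 * N * p5 (2 * N * x) + d / 3) 0 d).
  apply RI_le. lra. apply EX_k2. auto. intros x Hx. apply pt_up1; auto. destruct Hx; split; [assumption | left; assumption].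
  rewrite E1. rewrite Hde. replace (2 * N * 0) with 0 by ring. unfold q5. replace (0 ^ 3) with 0 by ring.
  replace (0 ^ 5) with 0 by ring. apply Req_le. field.
Qed.

Lemma Phi_2d_split n : (100 <= n)%nat ->
  Phi n (PI / INR n) = RI (fun x => k2 n x + k2 n (x + PI / (2 * INR n))) 0 (PI / (2 * INR n)).
Proof.
  intros Hn. pose proof (N_ge n Hn) as HN.
  set (d := PI / (2 * INR n)).
  assert (E : PI / INR n = d + d) by (unfold d; field; lra). rewrite E.
  rewrite (Phi_split n d (d + d)). unfold Phi.
  rewrite RI_plus. f_equal. rewrite RI_shift. f_equal; ring. replace (0 + d) with d by ring. apply EX_k2.
  apply EX_k2. apply EX_shift. apply EX_k2.
Qed.

Lemma Phi_2d_lb n : (100 <= n)%nat ->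
  q7 PI - 3 / (2 * PI) - 2 * (PI / (2 * INR n)) ^ 2 / 3 <= Phi n (PI / INR n).
Proof.
  intros Hn. pose proof (N_ge n Hn) as HN. pose proof (d_bounds n Hn). pose proof (d_eq n Hn) as Hde.
  pose proof PI_bounds.
  rewrite (Phi_2d_split n Hn).
  set (N := INR n) in *. set (d := PI / (2 * N)) in *.
  destruct (RI_FTC (fun x => q7 (2 * N * x) - Fc (2 * N * x) - 2 * d * x / 3)
     (fun x => 2 * N * p7 (2 * N * x) - 2 * N * sin (2 * N * x) * (/ PI - (2 * N * x) / (2 * PI ^ 2)) - 2 * d / 3) 0 d) as [E1 E2].
  lra. intros x _. unfold q7, p7, Fc. auto_derive. repeat split; lra. field. lra.
  intros x _. apply C_der. unfold p7. auto_derive. repeat split; lra.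
  apply Rle_trans with (RI (fun x => 2 * N * p7 (2 * N * x) - 2 * N * sin (2 * N * x) * (/ PI - (2 * N * x) / (2 * PI ^ 2)) - 2 * d / 3) 0 d).
  2: { apply RI_le. lra. auto. apply EX_plus. apply EX_k2. apply EX_shift. apply EX_k2.
       intros x Hx. apply pt_lo2; auto. }
  rewrite E1. rewrite Hde. replace (2 * N * 0) with 0 by ring. unfold q7, Fc.
  rewrite cos_PI, sin_PI, cos_0, sin_0. apply Req_le. field. lra.
Qed.

Lemma Phi_2d_ub n : (100 <= n)%nat ->
  Phi n (PI / INR n) <= q5 PI + (PI / (2 * INR n)) ^ 2 / 3 - / PI.
Proof.
  intros Hn. pose proof (N_ge n Hn) as HN. pose proof (d_bounds n Hn). pose proof (d_eq n Hn) as Hde.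
  pose proof PI_bounds.
  rewrite (Phi_2d_split n Hn).
  set (N := INR n) in *. set (d := PI / (2 * N)) in *.
  destruct (RI_FTC (fun x => q5 (2 * N * x) + d * x / 3 + cos (2 * N * x) / (4 * N * d))
     (fun x => 2 * N * p5 (2 * N * x) + d / 3 - sin (2 * N * x) / (2 * d)) 0 d) as [E1 E2].
  lra. intros x _. unfold q5, p5. auto_derive. repeat split; lra. field. lra.
  intros x _. apply C_der. unfold p5. auto_derive. repeat split; lra.
  apply Rle_trans with (RI (fun x => 2 * N * p5 (2 * N * x) + d / 3 - sin (2 * N * x) / (2 * d)) 0 d).
  apply RI_le. lra. apply EX_plus. apply EX_k2. apply EX_shift. apply EX_k2. auto.
  intros x Hx. apply pt_up3; auto.
  rewrite E1. rewrite Hde. replace (2 * N * 0) with 0 by ring. unfold q5.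
  rewrite cos_PI, cos_0. replace (4 * N * d) with (2 * PI) by lra. apply Req_le. field. lra.
Qed.

Definition Smax n := q5 PI + (PI / (2 * INR n)) ^ 2 / 3 + PI / (3 * INR n ^ 2).
Definition Smin n := q7 PI - 3 / (2 * PI) - 2 * (PI / (2 * INR n)) ^ 2 / 3.

Lemma pi_pows : 3.1415 ^ 3 <= PI ^ 3 <= 3.1416 ^ 3 /\ 3.1415 ^ 5 <= PI ^ 5 <= 3.1416 ^ 5 /\
  3.1415 ^ 7 <= PI ^ 7 <= 3.1416 ^ 7.
Proof.
  pose proof PI_bounds.
  repeat split; apply pow_incr; lra.
Qed.

Lemma inv_pi : / 3.1416 <= / PI <= / 3.1415.
Proof. pose proof PI_bounds. split; apply Rinv_le_contravar; lra. Qed.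

Lemma q5_bound : q5 PI <= 1.93.
Proof. pose proof PI_bounds; pose proof pi_pows. unfold q5. lra. Qed.
Lemma q7_bound : 1.843 <= q7 PI.
Proof. pose proof PI_bounds; pose proof pi_pows. unfold q7. lra. Qed.

Lemma small_terms n : (100 <= n)%nat -> (PI / (2 * INR n)) ^ 2 <= 0.0003 /\ PI / (3 * INR n ^ 2) <= 0.0002.
Proof.
  intros Hn. pose proof (N_ge n Hn). pose proof (d_bounds n Hn). pose proof PI_bounds.
  split. nra.
  assert (10000 <= INR n ^ 2) by nra.
  apply Rmult_le_reg_l with (3 * INR n ^ 2). nra.
  replace (3 * INR n ^ 2 * (PI / (3 * INR n ^ 2))) with PI by (field; nra). nra.
Qed.

Lemma Smax_bound n : (100 <= n)%nat -> Smax n <= 1.931.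
Proof. intros Hn. pose proof (small_terms n Hn). pose proof q5_bound. unfold Smax. lra. Qed.
Lemma Smin_bound n : (100 <= n)%nat -> 1.3653 <= Smin n.
Proof. intros Hn. pose proof (small_terms n Hn). pose proof q7_bound. pose proof inv_pi. unfold Smin.
  replace (3 / (2 * PI)) with (3 / 2 * / PI) by (field; pose proof PI_bounds; lra). lra. Qed.

Lemma inv_N_sin n : (100 <= n)%nat -> / INR n * / sin (PI / INR n) <= / PI + PI / (3 * INR n ^ 2).
Proof.
  intros Hn. pose proof (N_ge n Hn). pose proof PI_bounds.
  assert (0 < PI / INR n <= 1). { split. apply Rdiv_lt_0_compat; lra.
    apply Rmult_le_reg_l with (INR n). lra. replace (INR n * (PI / INR n)) with PI by (field; lra). lra. }
  pose proof (inv_sin_ub _ H1).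
  apply Rle_trans with (/ INR n * (/ (PI / INR n) + PI / INR n / 3)).
  apply Rmult_le_compat_l; auto. left; apply Rinv_0_lt_compat; lra.
  apply Req_le. field. lra.
Qed.

Lemma Phi_range n y : (100 <= n)%nat -> 0 <= y <= PI / 2 -> 0 <= Phi n y <= Smax n.
Proof.
  intros Hn Hy. pose proof (N_ge n Hn). pose proof PI_bounds.
  pose proof (Phi_d_ub n Hn). pose proof (Phi_2d_ub n Hn). pose proof (Phi_2d_lb n Hn).
  pose proof (inv_N_sin n Hn). pose proof (Smin_bound n Hn). unfold Smin in *.
  assert (0 < / PI) by (apply Rinv_0_lt_compat; lra).
  assert (0 <= PI / (3 * INR n ^ 2)) by (apply Rmult_le_pos; [lra | left; apply Rinv_0_lt_compat; nra]).
  assert (PI / (2 * INR n) <= PI / INR n).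
  { unfold Rdiv. apply Rmult_le_compat_l. lra. apply Rinv_le_contravar; lra. }
  assert (PI / INR n <= PI / 2).
  { unfold Rdiv. apply Rmult_le_compat_l. lra. apply Rinv_le_contravar; lra. }
  assert (0 <= PI / (2 * INR n)) by (apply Rmult_le_pos; [lra | left; apply Rinv_0_lt_compat; nra]).
  unfold Smax.
  destruct (Rle_dec y (PI / (2 * INR n))).
  - pose proof (Phi_A n y ltac:(lia) ltac:(lra)). lra.
  - destruct (Rle_dec y (PI / INR n)).
    + pose proof (Phi_B n y ltac:(lia) ltac:(lra)). lra.
    + pose proof (Phi_C n y ltac:(lia) ltac:(lra)). lra.
Qed.

Lemma Phi_big n y : (100 <= n)%nat -> PI / (2 * INR n) <= y <= PI / 2 -> Smin n <= Phi n y.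
Proof.
  intros Hn Hy. pose proof (N_ge n Hn). pose proof PI_bounds.
  pose proof (Phi_2d_lb n Hn). unfold Smin.
  assert (PI / INR n <= PI / 2).
  { unfold Rdiv. apply Rmult_le_compat_l. lra. apply Rinv_le_contravar; lra. }
  destruct (Rle_dec y (PI / INR n)).
  + pose proof (Phi_B n y ltac:(lia) ltac:(lra)). lra.
  + pose proof (Phi_C n y ltac:(lia) ltac:(lra)). lra.
Qed.


Lemma arc_period n a b th (z : Z) : arc n a b (th + 2 * PI * IZR z) <-> arc n a b th.
Proof.
  unfold arc. split; intros [k Hk].
  - exists (z + k)%Z. rewrite plus_IZR. replace (th + 2 * PI * (IZR z + IZR k)) with (th + 2 * PI * IZR z + 2 * PI * IZR k) by ring. auto.
  - exists (k - z)%Z. rewrite minus_IZR. replace (th + 2 * PI * IZR z + 2 * PI * (IZR k - IZR z)) with (th + 2 * PI * IZR k) by ring. auto.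
Qed.

Lemma Z_cases (m : Z) : (m <= -1)%Z \/ m = 0%Z \/ (1 <= m)%Z.
Proof. lia. Qed.

Lemma arc_window n a b w T : (0 < n)%nat -> (a < b)%Z -> (b - a < 2 * Z.of_nat n)%Z ->
  0 < T <= 2 * PI -> ~ arc n a b w -> ~ arc n a b (w + T) ->
  (forall th, w <= th <= w + T -> ~ arc n a b th) \/
  exists c d, w < c /\ c <= d /\ d < w + T /\ d - c = IZR (b - a) * PI / INR n /\
    (exists z : Z, c = IZR a * PI / INR n + 2 * PI * IZR z) /\
    (forall th, w <= th <= w + T -> (arc n a b th <-> c <= th <= d)).
Proof.
  intros Hn Hab Hba HT Hw HwT.
  assert (HN : 0 < INR n) by (apply lt_0_INR; lia).
  pose proof PI_RGT_0 as Hpi.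
  set (A := IZR a * PI / INR n). set (B := IZR b * PI / INR n).
  assert (HAB : A < B). { unfold A, B. unfold Rdiv. apply Rmult_lt_compat_r. apply Rinv_0_lt_compat; auto.
    apply Rmult_lt_compat_r; auto. apply IZR_lt; auto. }
  assert (HBA : B - A < 2 * PI).
  { unfold A, B. replace (IZR b * PI / INR n - IZR a * PI / INR n) with (IZR (b - a) * PI / INR n)
      by (rewrite minus_IZR; field; lra).
    assert (IZR (b - a) < 2 * INR n). { rewrite INR_IZR_INZ. replace 2 with (IZR 2) by reflexivity.
      rewrite <- mult_IZR. apply IZR_lt. lia. }
    apply Rmult_lt_reg_r with (INR n); auto. replace (IZR (b - a) * PI / INR n * INR n) with (IZR (b-a) * PI) by (field; lra).
    nra. }
  set (k := (up ((w - A) / (2 * PI)))%Z).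
  destruct (archimed ((w - A) / (2 * PI))) as [Hk1 Hk2]. fold k in Hk1, Hk2.
  set (c := A + 2 * PI * IZR k). set (d := B + 2 * PI * IZR k).
  assert (Hc1 : w < c).
  { unfold c. apply Rmult_gt_compat_l with (r := 2 * PI) in Hk1; [|lra].
    replace (2 * PI * ((w - A) / (2 * PI))) with (w - A) in Hk1 by (field; lra). lra. }
  assert (Hc2 : c <= w + 2 * PI).
  { unfold c. assert (IZR k <= (w - A) / (2 * PI) + 1) by lra.
    apply Rmult_le_compat_l with (r := 2 * PI) in H; [|lra].
    replace (2 * PI * ((w - A) / (2 * PI) + 1)) with (w - A + 2 * PI) in H by (field; lra). lra. }
  assert (Hdc : d - c = B - A) by (unfold c, d; ring).
  assert (Hd : d < w + 2 * PI).
  { destruct (Rlt_le_dec d (w + 2 * PI)) as [|Hd]; auto. exfalso. apply Hw.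
    exists (1 - k)%Z. rewrite minus_IZR. fold A B. unfold c, d in *. split; nra. }
  assert (Key : forall th, w <= th <= w + T -> arc n a b th -> c <= th <= d).
  { intros th Hth [k' Hk']. fold A B in Hk'.
    destruct (Z_cases (k + k')) as [Hm|[Hm|Hm]].
    - exfalso. apply IZR_le in Hm. rewrite plus_IZR in Hm.
      assert (th >= c + 2 * PI). { unfold c. nra. } lra.
    - assert (IZR k' = - IZR k). { assert (IZR (k + k') = 0) by (rewrite Hm; reflexivity). rewrite plus_IZR in H. lra. }
      unfold c, d. rewrite H in Hk'. lra.
    - exfalso. apply IZR_le in Hm. rewrite plus_IZR in Hm.
      assert (th <= d - 2 * PI). { unfold d. nra. } lra. }
  destruct (Rlt_le_dec d (w + T)) as [HdT|HdT].
  - right. exists c, d. repeat split; try lra.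
    + rewrite Hdc. unfold A, B. rewrite minus_IZR. field. lra.
    + exists k. reflexivity.
    + intros; apply (Key th); auto.
    + intros; apply (Key th); auto.
    + intros [H1 H2]. exists (- k)%Z. rewrite opp_IZR. fold A B. unfold c, d in *. lra.
  - left. intros th Hth Harc.
    destruct (Rle_lt_dec c (w + T)) as [HcT|HcT].
    + apply HwT. exists (- k)%Z. rewrite opp_IZR. fold A B. unfold c, d in *. lra.
    + pose proof (Key th Hth Harc). lra.
Qed.


Lemma ind_int_empty (P : R -> Prop) (f : R -> R) w w' : w <= w' ->
  (forall th, w <= th <= w' -> ~ P th) ->
  ex_RInt (fun x => Defs.ind (P x) * f x) w w' /\ RI (fun x => Defs.ind (P x) * f x) w w' = 0.
Proof.
  intros Hw HP.
  assert (E : forall x, Rmin w w' < x < Rmax w w' -> 0 = Defs.ind (P x) * f x).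
  { intros x Hx. rewrite Rmin_left, Rmax_right in Hx by lra. rewrite ind_F. ring. apply HP; lra. }
  split. apply (EX_ext (fun _ => 0)); auto. apply EX_const.
  rewrite <- (RI_ext (fun _ => 0)) by auto. rewrite RI_const. ring.
Qed.

Lemma ind_int_iv (P : R -> Prop) (f : R -> R) w w' c d : w <= c -> c <= d -> d <= w' ->
  (forall th, w <= th <= w' -> (P th <-> c <= th <= d)) ->
  (forall x, c <= x <= d -> continuous f x) ->
  ex_RInt (fun x => Defs.ind (P x) * f x) w w' /\ RI (fun x => Defs.ind (P x) * f x) w w' = RI f c d.
Proof.
  intros H1 H2 H3 HP Hf.
  set (h := fun x => Defs.ind (P x) * f x).
  assert (Z : forall u v, u <= v -> (forall x, u < x < v -> h x = 0) -> ex_RInt h u v /\ RI h u v = 0).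
  { intros u v Huv Hz. assert (E : forall x, Rmin u v < x < Rmax u v -> (fun _ => 0) x = h x).
    { intros x Hx. rewrite Rmin_left, Rmax_right in Hx by lra. rewrite Hz; auto. }
    split. apply (EX_ext (fun _ => 0)); auto. apply EX_const.
    rewrite <- (RI_ext (fun _ => 0)) by auto. rewrite RI_const. ring. }
  destruct (Z w c) as [X1 R1]; auto.
  { intros x Hx. unfold h. rewrite ind_F. ring. rewrite HP; lra. }
  destruct (Z d w') as [X3 R3]; auto.
  { intros x Hx. unfold h. rewrite ind_F. ring. rewrite HP; lra. }
  assert (Ef : forall x, Rmin c d < x < Rmax c d -> f x = h x).
  { intros x Hx. rewrite Rmin_left, Rmax_right in Hx by lra. unfold h. rewrite ind_T. ring. rewrite HP; lra. }
  assert (Xf : ex_RInt f c d) by (apply EX_cont; auto).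
  assert (X2 : ex_RInt h c d) by (apply (EX_ext f); auto).
  assert (R2 : RI h c d = RI f c d) by (symmetry; apply RI_ext; auto).
  assert (X12 : ex_RInt h w d) by (apply (ex_RInt_Chasles _ _ c); auto).
  split. apply (ex_RInt_Chasles _ _ d); auto.
  rewrite <- (RI_chasles h w d w') by auto. rewrite <- (RI_chasles h w c d) by auto. lra.
Qed.


Lemma rsum_ext f g m : (forall i, (i < m)%nat -> f i = g i) -> rsum f m = rsum g m.
Proof. induction m; intros H; simpl; auto. rewrite IHm, H; auto. Qed.
Lemma rsum_plus f g m : rsum (fun i => f i + g i) m = rsum f m + rsum g m.
Proof. induction m; simpl. ring. rewrite IHm. ring. Qed.
Lemma rsum_scal c f m : rsum (fun i => c * f i) m = c * rsum f m.
Proof. induction m; simpl. ring. rewrite IHm. ring. Qed.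
Lemma rsum_le f g m : (forall i, (i < m)%nat -> f i <= g i) -> rsum f m <= rsum g m.
Proof. induction m; intros H; simpl. lra. apply Rplus_le_compat; auto. Qed.
Lemma rsum_abs f m : Rabs (rsum f m) <= rsum (fun i => Rabs (f i)) m.
Proof. induction m; simpl. rewrite Rabs_R0; lra. eapply Rle_trans. apply Rabs_triang. lra. Qed.
Lemma rsum_nonneg f m : (forall i, (i < m)%nat -> 0 <= f i) -> 0 <= rsum f m.
Proof. induction m; intros H; simpl. lra. assert (0 <= f m) by auto. assert (0 <= rsum f m) by auto. lra. Qed.
Lemma rsum_zero f m : (forall i, (i < m)%nat -> f i = 0) -> rsum f m = 0.
Proof. induction m; intros H; simpl. auto. rewrite IHm, H; auto. ring. Qed.
Lemma rsum_single f m i0 : (i0 < m)%nat -> (forall i, (i < m)%nat -> i <> i0 -> f i = 0) -> rsum f m = f i0.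
Proof.
  induction m; intros Hi H. lia. simpl.
  destruct (Nat.eq_dec i0 m).
  - subst. rewrite rsum_zero. ring. intros; apply H; lia.
  - rewrite IHm by (try lia; intros; apply H; lia). rewrite (H m) by lia. ring.
Qed.
Lemma rsum_unique_le (P : nat -> Prop) b m B : 0 <= B ->
  (forall i j, (i < m)%nat -> (j < m)%nat -> P i -> P j -> i = j) ->
  (forall i, (i < m)%nat -> ~ P i -> b i = 0) ->
  (forall i, (i < m)%nat -> P i -> b i <= B) ->
  rsum b m <= B.
Proof.
  induction m; intros HB Hu H0 H1; simpl. lra.
  destruct (classic (P m)) as [Pm|Pm].
  - assert (Z : rsum b m = 0).
    { apply rsum_zero. intros i Hi. apply H0. lia. intro Pi. assert (i = m) by (apply Hu; auto; lia). lia. }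
    rewrite Z. assert (b m <= B) by auto. lra.
  - rewrite (H0 m) by auto. rewrite Rplus_0_r. apply IHm; auto.
Qed.
Lemma rsum_mult_r f c m : rsum f m * c = rsum (fun i => f i * c) m.
Proof. induction m; simpl. ring. rewrite <- IHm. ring. Qed.

Lemma RI_rsum (F : nat -> R -> R) m a b : (forall i, (i < m)%nat -> ex_RInt (F i) a b) ->
  ex_RInt (fun x => rsum (fun i => F i x) m) a b /\
  RI (fun x => rsum (fun i => F i x) m) a b = rsum (fun i => RI (F i) a b) m.
Proof.
  induction m; intros H.
  - simpl. split. apply EX_const. rewrite RI_const. ring.
  - destruct IHm as [X E]. intros; apply H; lia.
    assert (Xm : ex_RInt (F m) a b) by (apply H; lia).
    split. apply (EX_plus (fun x => rsum (fun i => F i x) m) (F m)); auto.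
    simpl. rewrite (RI_plus (fun x => rsum (fun i => F i x) m) (F m)); auto. rewrite E. reflexivity.
Qed.


Section Ctx.
Variables (n : nat) (t : Z) (m : nat) (lo hi : nat -> Z) (alpha : nat -> R).
Hypothesis Hn : (100 <= n)%nat.
Hypothesis Hws : well_separated n t m lo hi.
Hypothesis Hsym : symmetric_colouring n m lo hi alpha.

Lemma W_iv i : (i < m)%nat -> (lo i < hi i)%Z /\ (hi i - lo i < 2 * Z.of_nat n)%Z.
Proof. destruct Hws as [[H _] _]. auto. Qed.
Lemma W_disj i j th : (i < m)%nat -> (j < m)%nat -> i <> j -> Ival n lo hi i th -> Ival n lo hi j th -> False.
Proof. destruct Hws as [[_ [H _]] _]. intros. apply (H i j H0 H1 H2 th); auto. Qed.
Lemma W_shift i : (i < m)%nat -> exists j, (j < m)%nat /\ forall th, Ival n lo hi j th <-> Ival n lo hi i (th - PI).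
Proof. destruct Hws as [[_ [_ [H _]]] _]. auto. Qed.
Lemma W_refl i : (i < m)%nat -> exists j, (j < m)%nat /\ forall th, Ival n lo hi j th <-> Ival n lo hi i (PI - th).
Proof. destruct Hws as [[_ [_ [_ [H _]]]] _]. auto. Qed.
Lemma W_len i : (i < m)%nat -> IZR (hi i - lo i) * PI / INR n <= 6 * PI / INR n.
Proof. destruct Hws as [_ [H _]]. auto. Qed.
Lemma W_sep i j x y : (i < m)%nat -> (j < m)%nat -> i <> j -> Ival n lo hi i x -> Ival n lo hi j y ->
  PI / INR n <= Rabs (x - y).
Proof. destruct Hws as [_ [_ [H _]]]. intros. pose proof (H i j H0 H1 H2 x y H3 H4 0%Z).
  rewrite Rmult_0_r, Rplus_0_r in H5. auto. Qed.
Lemma W_avoid i th (q : Z) : (i < m)%nat -> Ival n lo hi i th -> ~ Rabs (th - IZR q * PI / 2) <= 100 * PI / INR n.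
Proof. destruct Hws as [_ [_ [_ H]]]. intros. apply (H i); auto. Qed.
Lemma W_noq i (q : Z) : (i < m)%nat -> ~ Ival n lo hi i (IZR q * PI / 2).
Proof. intros Hi H. apply (W_avoid i _ q Hi H). rewrite Rminus_diag, Rabs_R0.
  assert (0 < INR n) by (apply lt_0_INR; lia). pose proof PI_RGT_0.
  apply Rmult_le_pos. lra. left; apply Rinv_0_lt_compat; auto. Qed.

Lemma Ival_period i th (z : Z) : Ival n lo hi i (th + 2 * PI * IZR z) <-> Ival n lo hi i th.
Proof. unfold Ival. apply arc_period. Qed.

Lemma S_col i : (i < m)%nat -> alpha i = 1 \/ alpha i = -1.
Proof. destruct Hsym as [H _]. auto. Qed.
Lemma S_refl i j : (i < m)%nat -> (j < m)%nat ->
  (forall th, Ival n lo hi j th <-> Ival n lo hi i (PI - th)) -> alpha j = alpha i.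
Proof. destruct Hsym as [_ [H _]]. auto. Qed.
Lemma S_shift i j : (i < m)%nat -> (j < m)%nat ->
  (forall th, Ival n lo hi j th <-> Ival n lo hi i (th - PI)) -> alpha j = - alpha i.
Proof. destruct Hsym as [_ [_ H]]. auto. Qed.

Lemma g_in i th : (i < m)%nat -> Ival n lo hi i th -> g_alpha n m lo hi alpha th = alpha i.
Proof.
  intros Hi H. unfold g_alpha. rewrite (rsum_single _ m i Hi).
  rewrite ind_T; auto; ring.
  intros j Hj Hji. rewrite ind_F. ring. intro Hj'. apply (W_disj i j th); auto.
Qed.
Lemma g_out th : (forall i, (i < m)%nat -> ~ Ival n lo hi i th) -> g_alpha n m lo hi alpha th = 0.
Proof.
  intros H. unfold g_alpha. apply rsum_zero. intros i Hi. rewrite ind_F; auto. ring.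
Qed.

Lemma g_shift th : g_alpha n m lo hi alpha (th + PI) = - g_alpha n m lo hi alpha th.
Proof.
  destruct (classic (exists i, (i < m)%nat /\ Ival n lo hi i th)) as [[i [Hi H]]|Hno].
  - destruct (W_shift i Hi) as [j [Hj Ej]].
    assert (Ij : Ival n lo hi j (th + PI)) by (apply Ej; replace (th + PI - PI) with th by ring; auto).
    rewrite (g_in j _ Hj Ij), (g_in i _ Hi H). apply (S_shift i j); auto.
  - rewrite (g_out th). rewrite g_out. ring.
    + intros j Hj Ij. apply Hno. destruct (W_shift j Hj) as [k [Hk Ek]]. exists k. split; auto.
      apply Ek. apply (Ival_period j (th - PI) 1%Z). change (IZR 1) with 1.
      replace (th - PI + 2 * PI * 1) with (th + PI) by ring. auto.
    + intros i Hi Ii. apply Hno. exists i; auto.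
Qed.

Lemma g_refl th : g_alpha n m lo hi alpha (PI - th) = g_alpha n m lo hi alpha th.
Proof.
  destruct (classic (exists i, (i < m)%nat /\ Ival n lo hi i th)) as [[i [Hi H]]|Hno].
  - destruct (W_refl i Hi) as [j [Hj Ej]].
    assert (Ij : Ival n lo hi j (PI - th)) by (apply Ej; replace (PI - (PI - th)) with th by ring; auto).
    rewrite (g_in j _ Hj Ij), (g_in i _ Hi H). apply (S_refl i j); auto.
  - rewrite (g_out th). rewrite g_out. ring.
    + intros j Hj Ij. apply Hno. destruct (W_refl j Hj) as [k [Hk Ek]]. exists k. split; auto.
      apply Ek. auto.
    + intros i Hi Ii. apply Hno. exists i; auto.
Qed.

Lemma g_odd th : g_alpha n m lo hi alpha (- th) = - g_alpha n m lo hi alpha th.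
Proof.
  replace (- th) with (PI - (th + PI)) by ring. rewrite g_refl. apply g_shift.
Qed.

Notation gA := (g_alpha n m lo hi alpha).

Lemma win_struct i w T : (i < m)%nat -> 0 < T <= 2 * PI -> ~ Ival n lo hi i w -> ~ Ival n lo hi i (w + T) ->
  (forall th, w <= th <= w + T -> ~ Ival n lo hi i th) \/
  exists c d, w < c /\ c <= d /\ d < w + T /\ d - c = IZR (hi i - lo i) * PI / INR n /\
    (exists z : Z, c = IZR (lo i) * PI / INR n + 2 * PI * IZR z) /\
    (forall th, w <= th <= w + T -> (Ival n lo hi i th <-> c <= th <= d)).
Proof.
  intros Hi HT H1 H2. destruct (W_iv i Hi). unfold Ival in *. apply arc_window; auto. lia.
Qed.

Lemma EX_ind_win i (f : R -> R) w T : (i < m)%nat -> 0 < T <= 2 * PI -> ~ Ival n lo hi i w -> ~ Ival n lo hi i (w + T) ->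
  (forall x, continuous f x) -> ex_RInt (fun x => Defs.ind (Ival n lo hi i x) * f x) w (w + T).
Proof.
  intros Hi HT H1 H2 Hf. destruct (win_struct i w T Hi HT H1 H2) as [E|[c [d [? [? [? [_ [_ E]]]]]]]].
  - apply ind_int_empty; auto; lra.
  - apply (ind_int_iv _ _ _ _ c d); auto; lra.
Qed.

Lemma g_rsum (f : R -> R) x : gA x * f x = rsum (fun i => alpha i * (Defs.ind (Ival n lo hi i x) * f x)) m.
Proof. unfold g_alpha. rewrite rsum_mult_r. apply rsum_ext. intros; ring. Qed.

Lemma EX_g_win (f : R -> R) w T : 0 < T <= 2 * PI ->
  (forall i, (i < m)%nat -> ~ Ival n lo hi i w /\ ~ Ival n lo hi i (w + T)) ->
  (forall x, continuous f x) -> ex_RInt (fun x => gA x * f x) w (w + T).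
Proof.
  intros HT Hend Hf.
  destruct (RI_rsum (fun i x => alpha i * (Defs.ind (Ival n lo hi i x) * f x)) m w (w + T)) as [X _].
  { intros i Hi. apply EX_scal. destruct (Hend i Hi). apply EX_ind_win; auto. }
  apply (EX_ext _ _ _ _ (fun x _ => eq_sym (g_rsum f x))). auto.
Qed.

Lemma PI2_pos : 0 < PI / 2.
Proof. pose proof PI_RGT_0; lra. Qed.

Lemma EX_g_q (f : R -> R) (q : Z) : (forall x, continuous f x) ->
  ex_RInt (fun x => gA x * f x) (IZR q * PI / 2) (IZR q * PI / 2 + PI / 2).
Proof.
  intros Hf. apply EX_g_win; auto. pose proof PI_RGT_0; lra.
  intros i Hi. split. apply W_noq; auto.
  replace (IZR q * PI / 2 + PI / 2) with (IZR (q + 1) * PI / 2) by (rewrite plus_IZR; change (IZR 1) with 1; field).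
  apply W_noq; auto.
Qed.

Lemma EX_g_qk (f : R -> R) (q : Z) (k : nat) : (forall x, continuous f x) ->
  ex_RInt (fun x => gA x * f x) (IZR q * PI / 2) (IZR (q + Z.of_nat k) * PI / 2).
Proof.
  intros Hf. induction k.
  - replace (q + Z.of_nat 0)%Z with q by lia. apply ex_RInt_point.
  - apply (ex_RInt_Chasles _ _ (IZR (q + Z.of_nat k) * PI / 2)); auto.
    replace (IZR (q + Z.of_nat (S k)) * PI / 2) with (IZR (q + Z.of_nat k) * PI / 2 + PI / 2).
    apply EX_g_q; auto. replace (q + Z.of_nat (S k))%Z with ((q + Z.of_nat k) + 1)%Z by lia. rewrite (plus_IZR (q + Z.of_nat k) 1). change (IZR 1) with 1. field.
Qed.

Variable th : R.

Definition FF (phi : R) : R := gA phi * Dk n (th - phi).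

Lemma cont_Dk_lin a b : forall x, continuous (fun y => Dk n (a + b * y)) x.
Proof. intros x. apply (continuous_comp (fun y => a + b * y) (Dk n)). apply C_der. auto_derive. auto. apply Dk_cont. Qed.

Lemma EX_g_pi (f : R -> R) : (forall x, continuous f x) -> ex_RInt (fun x => gA x * f x) (- PI) PI.
Proof.
  intros Hf. pose proof (EX_g_qk f (-2)%Z 4 Hf) as H.
  replace (IZR (-2) * PI / 2) with (- PI) in H by (change (IZR (-2)) with (-2); field).
  replace (IZR (-2 + Z.of_nat 4) * PI / 2) with PI in H by (change (IZR (-2 + Z.of_nat 4)) with 2; field).
  auto.
Qed.

Lemma EX_FF_pi : ex_RInt FF (- PI) PI.
Proof.
  apply (EX_ext (fun x => gA x * Dk n (th + -1 * x))). intros; unfold FF. f_equal. f_equal. ring.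
  apply EX_g_pi. apply cont_Dk_lin.
Qed.





Lemma RInt_RI (f : R -> R) a b : RInt f a b = RI f a b.
Proof. reflexivity. Qed.

Lemma cont_sin_lin (a c : R) : forall x, continuous (fun y => sin (a * y) * c) x.
Proof. intros x. apply C_der. auto_derive. auto. Qed.

Lemma shat_1 : s_hat n m lo hi alpha th =
  K * sqrt (INR n) * RI (fun phi => gA phi * (/ 2 * (Dk n (th - phi) - Dk n (th + phi)))) (- PI) PI.
Proof.
  unfold s_hat, eps_hat.
  set (c := K * sqrt (INR n)).
  set (F := fun (l : nat) (phi : R) => gA phi * (sin (INR (2 * l + 1) * phi) * sin (INR (2 * l + 1) * th))).
  assert (XF : forall l, (l < n)%nat -> ex_RInt (F l) (- PI) PI).
  { intros l _. unfold F. apply EX_g_pi. apply cont_sin_lin. }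
  rewrite (rsum_ext _ (fun l => c * RI (F l) (- PI) PI)).
  2: { intros l Hl. rewrite RInt_RI. unfold F. rewrite Rmult_assoc. f_equal.
       rewrite Rmult_comm. rewrite <- RI_scal. apply RI_ext. intros; ring.
       apply (EX_ext (fun x => gA x * (sin (INR (2 * l + 1) * x) * 1))). intros; ring.
       apply EX_g_pi. apply cont_sin_lin. }
  rewrite rsum_scal. f_equal.
  destruct (RI_rsum F n (- PI) PI XF) as [_ E]. rewrite <- E.
  apply RI_ext. intros x _. unfold F.
  rewrite <- sin_sin_D. unfold g_alpha.
  apply rsum_scal.
Qed.

Lemma shat_2 : RI (fun phi => gA phi * (/ 2 * (Dk n (th - phi) - Dk n (th + phi)))) (- PI) PI = RI FF (- PI) PI.
Proof.
  assert (X1 : ex_RInt FF (- PI) PI) by apply EX_FF_pi.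
  assert (X2 : ex_RInt (fun phi => gA phi * Dk n (th + phi)) (- PI) PI).
  { apply (EX_ext (fun x => gA x * Dk n (th + 1 * x))). intros; do 3 f_equal; ring.
    apply EX_g_pi. apply cont_Dk_lin. }
  assert (E1 : RI (fun phi => gA phi * Dk n (th + phi)) (- PI) PI = - RI FF (- PI) PI).
  { assert (X1' : ex_RInt FF (0 - - PI) (0 - PI)).
    { replace (0 - - PI) with PI by ring. replace (0 - PI) with (- PI) by ring. apply ex_RInt_swap; auto. }
    pose proof (RI_refl FF 0 (- PI) PI X1') as E.
    replace (0 - PI) with (- PI) in E by ring. replace (0 - - PI) with PI in E by ring.
    rewrite <- E. rewrite <- (Rmult_1_l (RI (fun y => FF (0 - y)) (- PI) PI)).
    rewrite Ropp_mult_distr_l. rewrite <- RI_scal.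
    - apply RI_ext. intros x _. unfold FF. replace (0 - x) with (- x) by ring. rewrite g_odd.
      replace (th - - x) with (th + x) by ring. ring.
    - apply EX_refl. auto. }
  rewrite (RI_ext _ (fun phi => / 2 * FF phi - / 2 * (gA phi * Dk n (th + phi)))).
  2: { intros x _. unfold FF. ring. }
  rewrite RI_minus, !RI_scal, E1 by (auto; apply EX_scal; auto). field.
Qed.



Lemma cont_Dk_m : forall x, continuous (fun y => Dk n (th - y)) x.
Proof. intros x. apply (C_ext (fun y => Dk n (th + -1 * y))). intros; f_equal; ring. apply cont_Dk_lin. Qed.

Lemma FF_per y : FF (y + PI) = FF y.
Proof.
  unfold FF. rewrite g_shift.
  replace (th - (y + PI)) with ((th - y) - PI) by ring.
  replace (Dk n (th - y)) with (Dk n ((th - y - PI) + PI)) by (f_equal; ring).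
  rewrite Dk_shift. ring.
Qed.

Definition Qq (q : Z) := RI FF (IZR q * PI / 2) (IZR q * PI / 2 + PI / 2).

Lemma EX_FF_q (q : Z) : ex_RInt FF (IZR q * PI / 2) (IZR q * PI / 2 + PI / 2).
Proof. apply (EX_g_q (fun y => Dk n (th - y))). apply cont_Dk_m. Qed.

Lemma Z_succ_half (q : Z) : IZR (q + 1) * PI / 2 = IZR q * PI / 2 + PI / 2.
Proof. rewrite plus_IZR. change (IZR 1) with 1. field. Qed.

Lemma Qq_per (q : Z) : Qq (q + 2) = Qq q.
Proof.
  unfold Qq. replace (IZR (q + 2) * PI / 2) with (IZR q * PI / 2 + PI) by (rewrite plus_IZR; change (IZR 2) with 2; field).
  replace (IZR q * PI / 2 + PI + PI / 2) with (IZR q * PI / 2 + PI / 2 + PI) by ring.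
  rewrite <- RI_shift. apply RI_ext. intros; apply FF_per.
  replace (IZR q * PI / 2 + PI / 2 + PI) with ((IZR q * PI / 2 + PI) + PI / 2) by ring.
  replace (IZR q * PI / 2 + PI) with (IZR (q + 2) * PI / 2) by (rewrite plus_IZR; change (IZR 2) with 2; field).
  apply EX_FF_q.
Qed.

Lemma FF_half (q : Z) : RI FF (IZR q * PI / 2) (IZR q * PI / 2 + PI) = Qq q + Qq (q + 1).
Proof.
  unfold Qq. rewrite Z_succ_half.
  replace (IZR q * PI / 2 + PI / 2 + PI / 2) with (IZR q * PI / 2 + PI) by field.
  rewrite RI_chasles. auto. apply EX_FF_q. rewrite <- Z_succ_half. 
  replace (IZR q * PI / 2 + PI) with (IZR (q + 1) * PI / 2 + PI / 2) by (rewrite Z_succ_half; field).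
  apply EX_FF_q.
Qed.

Lemma PQ_step (q : Z) : Qq q + Qq (q + 1) = Qq (q + 1) + Qq (q + 1 + 1).
Proof. replace (q + 1 + 1)%Z with (q + 2)%Z by lia. rewrite Qq_per. ring. Qed.

Lemma PQ_const (q : Z) : Qq q + Qq (q + 1) = Qq 0 + Qq 1.
Proof.
  assert (Up : forall k : nat, Qq (Z.of_nat k) + Qq (Z.of_nat k + 1) = Qq 0 + Qq 1).
  { induction k. reflexivity. rewrite Nat2Z.inj_succ. unfold Z.succ. rewrite <- IHk. symmetry. apply PQ_step. }
  assert (Dn : forall k : nat, Qq (- Z.of_nat k) + Qq (- Z.of_nat k + 1) = Qq 0 + Qq 1).
  { induction k. reflexivity. rewrite <- IHk. rewrite Nat2Z.inj_succ.
    replace (- Z.of_nat k)%Z with (- Z.succ (Z.of_nat k) + 1)%Z by lia.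
    replace (- Z.succ (Z.of_nat k) + 1 + 1)%Z with (- Z.succ (Z.of_nat k) + 1 + 1)%Z by lia.
    apply PQ_step. }
  destruct (Z_le_gt_dec 0 q).
  - replace q with (Z.of_nat (Z.to_nat q)) by lia. apply Up.
  - replace q with (- Z.of_nat (Z.to_nat (- q)))%Z by lia. apply Dn.
Qed.

Lemma FF_full (q : Z) : RI FF (- PI) PI = 2 * RI FF (IZR q * PI / 2) (IZR q * PI / 2 + PI).
Proof.
  rewrite FF_half, PQ_const.
  pose proof (FF_half (-2)) as E1. pose proof (FF_half 0) as E2.
  change (IZR (-2)) with (-2) in E1. change (IZR 0) with 0 in E2.
  replace (-2 * PI / 2) with (- PI) in E1 by field. replace (- PI + PI) with 0 in E1 by ring.
  replace (0 * PI / 2) with 0 in E2 by field. replace (0 + PI) with PI in E2 by ring.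
  rewrite PQ_const in E1. replace (0 + 1)%Z with 1%Z in E2 by lia.
  rewrite <- (RI_chasles FF (- PI) 0 PI). rewrite E1, E2. ring.
  - apply (ex_RInt_Chasles _ _ (- PI / 2)).
    + pose proof (EX_FF_q (-2)) as H. change (IZR (-2)) with (-2) in H.
      replace (-2 * PI / 2) with (- PI) in H by field. replace (- PI + PI / 2) with (- PI / 2) in H by field. auto.
    + pose proof (EX_FF_q (-1)) as H. change (IZR (-1)) with (-1) in H.
      replace (-1 * PI / 2) with (- PI / 2) in H by field. replace (- PI / 2 + PI / 2) with 0 in H by field. auto.
  - apply (ex_RInt_Chasles _ _ (PI / 2)).
    + pose proof (EX_FF_q 0) as H. change (IZR 0) with 0 in H.
      replace (0 * PI / 2) with 0 in H by field. replace (0 + PI / 2) with (PI / 2) in H by field. auto.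
    + pose proof (EX_FF_q 1) as H. change (IZR 1) with 1 in H.
      replace (1 * PI / 2) with (PI / 2) in H by field. replace (PI / 2 + PI / 2) with PI in H by field. auto.
Qed.

Lemma shat_main (q : Z) : s_hat n m lo hi alpha th =
  K * sqrt (INR n) * (2 * RI FF (IZR q * PI / 2) (IZR q * PI / 2 + PI)).
Proof. rewrite shat_1, shat_2, (FF_full q). reflexivity. Qed.


Definition Ui (p : R) (i : nat) := RI (fun phi => Defs.ind (Ival n lo hi i phi) * Dk n (th - phi)) p (p + PI).

Lemma noq_pi (q : Z) i : (i < m)%nat -> ~ Ival n lo hi i (IZR q * PI / 2 + PI).
Proof. intros Hi. replace (IZR q * PI / 2 + PI) with (IZR (q + 2) * PI / 2) by (rewrite plus_IZR; change (IZR 2) with 2; field).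
  apply W_noq; auto. Qed.

Lemma FF_decomp (q : Z) : RI FF (IZR q * PI / 2) (IZR q * PI / 2 + PI) =
  rsum (fun i => alpha i * Ui (IZR q * PI / 2) i) m.
Proof.
  set (p := IZR q * PI / 2).
  assert (X : forall i, (i < m)%nat -> ex_RInt (fun x => Defs.ind (Ival n lo hi i x) * Dk n (th - x)) p (p + PI)).
  { intros i Hi. apply EX_ind_win; auto. pose proof PI_RGT_0; lra. apply W_noq; auto. apply noq_pi; auto.
    apply cont_Dk_m. }
  destruct (RI_rsum (fun i x => alpha i * (Defs.ind (Ival n lo hi i x) * Dk n (th - x))) m p (p + PI)) as [_ E].
  { intros i Hi. apply EX_scal. auto. }
  rewrite (RI_ext _ (fun x => rsum (fun i => alpha i * (Defs.ind (Ival n lo hi i x) * Dk n (th - x))) m)).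
  rewrite E. apply rsum_ext. intros i Hi. unfold Ui. apply RI_scal. auto.
  intros x _. unfold FF. apply (g_rsum (fun y => Dk n (th - y))).
Qed.

Lemma cos_period_Z x (k : Z) : (0 <= k)%Z -> cos (x + 2 * IZR k * PI) = cos x.
Proof. intros Hk. replace (IZR k) with (INR (Z.to_nat k)). apply cos_period.
  rewrite INR_IZR_INZ. f_equal. lia. Qed.

Lemma idata (q : Z) i : (i < m)%nat ->
  let p := IZR q * PI / 2 in let R0 := th - p in
  (Ui p i = 0 /\ forall x, R0 - PI <= x <= R0 -> ~ Ival n lo hi i (th - x)) \/
  exists a b, R0 - PI < a /\ a <= b /\ b < R0 /\ b - a = IZR (hi i - lo i) * PI / INR n /\
    cos (2 * INR n * a) = cos (2 * INR n * b) /\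
    (forall x, R0 - PI <= x <= R0 -> (Ival n lo hi i (th - x) <-> a <= x <= b)) /\
    2 * Ui p i = RI (k2 n) a b.
Proof.
  intros Hi p R0. pose proof PI_RGT_0 as Hpi.
  assert (HN : 0 < INR n) by (apply lt_0_INR; lia).
  destruct (win_struct i p PI Hi ltac:(lra) (W_noq i q Hi) (noq_pi q i Hi)) as [E|[c [d [H1 [H2 [H3 [H4 [_ H6]]]]]]]].
  - left. split.
    + unfold Ui. apply ind_int_empty. lra. auto.
    + intros x Hx. apply E. unfold R0 in Hx. lra.
  - right. exists (th - d), (th - c).
    assert (Hw : forall x, R0 - PI <= x <= R0 -> p <= th - x <= p + PI) by (intros x Hx; unfold R0 in Hx; lra).
    split; [unfold R0; lra|]. split; [lra|]. split; [unfold R0; lra|].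
    split; [rewrite <- H4; ring|].
    split.
    { replace (2 * INR n * (th - c)) with (2 * INR n * (th - d) + 2 * IZR (hi i - lo i) * PI).
      rewrite cos_period_Z. auto. destruct (W_iv i Hi). lia.
      replace (th - c) with (th - d + (d - c)) by ring. rewrite H4. field. lra. }
    split.
    { intros x Hx. rewrite (H6 (th - x) (Hw x Hx)). lra. }
    unfold Ui. destruct (ind_int_iv (fun phi => Ival n lo hi i phi) (fun phi => Dk n (th - phi)) p (p + PI) c d)
        as [_ E]; try lra. auto. intros; apply cont_Dk_m.
    rewrite E. rewrite RI_refl. unfold k2. rewrite RI_scal. reflexivity.
    apply EX_cont. lra. intros; apply Dk_cont.
    apply ex_RInt_swap. apply EX_cont. lra. intros; apply Dk_cont.
Qed.

End Ctx.


Definition cotg (x : R) := cos x / sin x.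

Lemma RI_isin2 a b : a <= b -> (forall x, a <= x <= b -> sin x <> 0) ->
  RI (fun x => / (sin x) ^ 2) a b = cotg a - cotg b /\ ex_RInt (fun x => / (sin x) ^ 2) a b.
Proof.
  intros Hab Hs.
  destruct (RI_FTC (fun x => - cotg x) (fun x => / (sin x) ^ 2) a b Hab) as [E X].
  - intros x Hx. specialize (Hs x Hx). unfold cotg. auto_derive. auto.
    pose proof (sin2_cos2 x). unfold Rsqr in H. field_simplify; auto. rewrite <- H. field. auto.
  - intros x Hx. specialize (Hs x Hx). apply C_der. auto_derive. nzt Hs.
  - split; auto. rewrite E. ring.
Qed.

Lemma sum_ind_le1 (P : nat -> R -> Prop) (c : nat -> R) m x :
  (forall i j, (i < m)%nat -> (j < m)%nat -> i <> j -> P i x -> P j x -> False) ->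
  (forall i, (i < m)%nat -> 0 <= c i <= 1) ->
  rsum (fun i => c i * Defs.ind (P i x)) m <= 1.
Proof.
  intros Hd Hc. apply (rsum_unique_le (fun i => P i x)). lra.
  intros i j Hi Hj Pi Pj. destruct (Nat.eq_dec i j); auto. exfalso; apply (Hd i j); auto.
  intros i Hi nP. rewrite ind_F; auto. ring.
  intros i Hi Pi. rewrite ind_T; auto. specialize (Hc i Hi). lra.
Qed.

Section Bound.
Variables (n m : nat) (alpha T A B : nat -> R) (P : nat -> R -> Prop) (R0 : R).
Hypothesis Hn : (100 <= n)%nat.
Hypothesis HR : PI / 4 <= R0 <= 3 * PI / 4.
Hypothesis Hal : forall i, (i < m)%nat -> alpha i = 1 \/ alpha i = -1.
Hypothesis Hdat : forall i, (i < m)%nat ->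
  (B i < A i /\ T i = 0 /\ forall x, R0 - PI <= x <= R0 -> ~ P i x) \/
  (R0 - PI < A i /\ A i <= B i /\ B i < R0 /\ PI / INR n <= B i - A i <= 6 * PI / INR n /\
   cos (2 * INR n * A i) = cos (2 * INR n * B i) /\
   (forall x, R0 - PI <= x <= R0 -> (P i x <-> A i <= x <= B i)) /\ T i = RI (k2 n) (A i) (B i)).
Hypothesis Hdisj : forall i j x, (i < m)%nat -> (j < m)%nat -> i <> j -> P i x -> P j x -> False.
Hypothesis Hsep : forall i j x y, (i < m)%nat -> (j < m)%nat -> i <> j -> P i x -> P j y ->
  PI / INR n <= Rabs (x - y).

Lemma Nb : 100 <= INR n.
Proof. replace 100 with (INR 100) by (rewrite INR_IZR_INZ; reflexivity). apply le_INR; lia. Qed.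
Lemma h_small : 0 < PI / INR n <= PI / 100.
Proof. pose proof Nb. pose proof PI_bounds. split. apply Rdiv_lt_0_compat; lra.
  unfold Rdiv. apply Rmult_le_compat_l. lra. apply Rinv_le_contravar; lra. Qed.

Lemma dat_ne i : (i < m)%nat -> A i <= B i ->
  R0 - PI < A i /\ A i <= B i /\ B i < R0 /\ PI / INR n <= B i - A i <= 6 * PI / INR n /\
   cos (2 * INR n * A i) = cos (2 * INR n * B i) /\
   (forall x, R0 - PI <= x <= R0 -> (P i x <-> A i <= x <= B i)) /\ T i = RI (k2 n) (A i) (B i).
Proof. intros Hi Hab. destruct (Hdat i Hi) as [[H _]|H]; auto. lra. Qed.

Lemma dat_P i x : (i < m)%nat -> A i <= x <= B i -> P i x.
Proof. intros Hi Hx. destruct (dat_ne i Hi ltac:(lra)) as [H1 [_ [H3 [_ [_ [H6 _]]]]]].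
  apply H6; lra. Qed.

Definition own i := A i <= 0 <= B i.
Definition rf i := PI / INR n <= A i /\ A i <= B i.
Definition lf i := A i <= B i /\ B i <= - (PI / INR n).
Definition nR i := 0 < A i /\ A i < PI / INR n /\ A i <= B i.
Definition nL i := A i <= B i /\ - (PI / INR n) < B i /\ B i < 0.
Definition far i := rf i \/ lf i.

Definition isin2 (x : R) := / (sin x) ^ 2.
Definition ER i := RI (fun x => Defs.ind (rf i) * (Defs.ind (P i x) * isin2 x)) (PI / INR n) R0.
Definition EL i := RI (fun x => Defs.ind (lf i) * (Defs.ind (P i x) * isin2 x)) (R0 - PI) (- (PI / INR n)).

Lemma sin_nz_R x : PI / INR n <= x <= R0 -> 0 < sin x.
Proof. intros. pose proof h_small. apply sin_gt_0; lra. Qed.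
Lemma sin_nz_L x : R0 - PI <= x <= - (PI / INR n) -> sin x < 0.
Proof. intros. pose proof h_small. apply sin_lt_0_var; lra. Qed.

Lemma ER_ok i : (i < m)%nat ->
  ex_RInt (fun x => Defs.ind (rf i) * (Defs.ind (P i x) * isin2 x)) (PI / INR n) R0 /\ 0 <= ER i /\
  (rf i -> ER i = RI isin2 (A i) (B i)).
Proof.
  intros Hi. pose proof h_small. pose proof PI_bounds.
  destruct (classic (rf i)) as [Hr|Hr].
  - destruct Hr as [Hr1 Hr2]. destruct (dat_ne i Hi Hr2) as [H1 [_ [H3 [_ [_ [H6 _]]]]]].
    destruct (ind_int_iv (fun x => P i x) isin2 (PI / INR n) R0 (A i) (B i)) as [X E]; try lra.
    { intros x Hx. apply H6. lra. }
    { intros x Hx. assert (0 < sin x) by (apply sin_nz_R; lra). assert (Hz : sin x <> 0) by lra.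
      apply C_der. unfold isin2. auto_derive. nzt Hz. }
    assert (Hc : forall x, Defs.ind (rf i) * (Defs.ind (P i x) * isin2 x) = Defs.ind (P i x) * isin2 x).
    { intros. rewrite ind_T. ring. split; auto. }
    unfold ER. rewrite (RI_ext _ (fun x => Defs.ind (P i x) * isin2 x)) by (intros; apply Hc).
    split. { apply (EX_ext (fun x => Defs.ind (P i x) * isin2 x)); [intros; symmetry; apply Hc | auto]. }
    split. rewrite E. apply RI_nonneg. lra. destruct (RI_isin2 (A i) (B i)) as [_ X2]; auto.
      intros x Hx. assert (0 < sin x) by (apply sin_nz_R; lra). lra.
      intros x Hx. unfold isin2. left; apply Rinv_0_lt_compat. apply pow2_gt_0. assert (0 < sin x) by (apply sin_nz_R; lra). lra.
    intros _. auto.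
  - assert (Hc : forall x, Defs.ind (rf i) * (Defs.ind (P i x) * isin2 x) = 0).
    { intros. rewrite ind_F; auto. ring. }
    unfold ER. rewrite (RI_ext _ (fun _ => 0)) by (intros; apply Hc). rewrite RI_const.
    split. apply (EX_ext (fun _ => 0)). intros; symmetry; apply Hc. apply EX_const.
    split. lra. intros; contradiction.
Qed.

Lemma EL_ok i : (i < m)%nat ->
  ex_RInt (fun x => Defs.ind (lf i) * (Defs.ind (P i x) * isin2 x)) (R0 - PI) (- (PI / INR n)) /\ 0 <= EL i /\
  (lf i -> EL i = RI isin2 (A i) (B i)).
Proof.
  intros Hi. pose proof h_small. pose proof PI_bounds.
  destruct (classic (lf i)) as [Hr|Hr].
  - destruct Hr as [Hr1 Hr2]. destruct (dat_ne i Hi Hr1) as [H1 [_ [H3 [_ [_ [H6 _]]]]]].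
    destruct (ind_int_iv (fun x => P i x) isin2 (R0 - PI) (- (PI / INR n)) (A i) (B i)) as [X E]; try lra.
    { intros x Hx. apply H6. lra. }
    { intros x Hx. assert (sin x < 0) by (apply sin_nz_L; lra). assert (Hz : sin x <> 0) by lra.
      apply C_der. unfold isin2. auto_derive. nzt Hz. }
    assert (Hc : forall x, Defs.ind (lf i) * (Defs.ind (P i x) * isin2 x) = Defs.ind (P i x) * isin2 x).
    { intros. rewrite ind_T. ring. split; auto. }
    unfold EL. rewrite (RI_ext _ (fun x => Defs.ind (P i x) * isin2 x)) by (intros; apply Hc).
    split. { apply (EX_ext (fun x => Defs.ind (P i x) * isin2 x)); [intros; symmetry; apply Hc | auto]. }
    split. rewrite E. apply RI_nonneg. lra. destruct (RI_isin2 (A i) (B i)) as [_ X2]; auto.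
      intros x Hx. assert (sin x < 0) by (apply sin_nz_L; lra). lra.
      intros x Hx. unfold isin2. left; apply Rinv_0_lt_compat. apply pow2_gt_0. assert (sin x < 0) by (apply sin_nz_L; lra). lra.
    intros _. auto.
  - assert (Hc : forall x, Defs.ind (lf i) * (Defs.ind (P i x) * isin2 x) = 0).
    { intros. rewrite ind_F; auto. ring. }
    unfold EL. rewrite (RI_ext _ (fun _ => 0)) by (intros; apply Hc). rewrite RI_const.
    split. apply (EX_ext (fun _ => 0)). intros; symmetry; apply Hc. apply EX_const.
    split. lra. intros; contradiction.
Qed.
Lemma sumER : rsum ER m <= cotg (PI / INR n) - cotg R0.
Proof.
  pose proof h_small. pose proof PI_bounds.
  destruct (RI_rsum (fun i x => Defs.ind (rf i) * (Defs.ind (P i x) * isin2 x)) m (PI / INR n) R0) as [X E].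
  { intros i Hi. apply (ER_ok i Hi). }
  assert (E' : rsum ER m = RI (fun x => rsum (fun i => Defs.ind (rf i) * (Defs.ind (P i x) * isin2 x)) m) (PI / INR n) R0)
    by (rewrite E; reflexivity).
  rewrite E'.
  destruct (RI_isin2 (PI / INR n) R0) as [E2 X2]. lra.
  { intros x Hx. assert (0 < sin x) by (apply sin_nz_R; lra). lra. }
  rewrite <- E2. apply RI_le; auto. lra.
  intros x Hx. assert (0 < sin x) by (apply sin_nz_R; lra).
  assert (Hs : 0 <= isin2 x) by (unfold isin2; left; apply Rinv_0_lt_compat; apply pow_lt; auto).
  rewrite (rsum_ext _ (fun i => (Defs.ind (rf i) * Defs.ind (P i x)) * isin2 x)) by (intros; ring).
  rewrite <- rsum_mult_r.
  assert (rsum (fun i => Defs.ind (rf i) * Defs.ind (P i x)) m <= 1).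
  { apply sum_ind_le1. intros; apply (Hdisj i j x); auto. intros i _. destruct (ind_01 (rf i)) as [Z|Z]; rewrite Z; lra. }
  assert (0 <= rsum (fun i => Defs.ind (rf i) * Defs.ind (P i x)) m).
  { apply rsum_nonneg. intros i _. destruct (ind_01 (rf i)) as [Z|Z]; destruct (ind_01 (P i x)) as [Z'|Z']; rewrite Z, Z'; lra. }
  change (/ sin x ^ 2) with (isin2 x). apply Rle_trans with (1 * isin2 x); [apply Rmult_le_compat_r; auto | lra].
Qed.

Lemma sumEL : rsum EL m <= cotg (R0 - PI) - cotg (- (PI / INR n)).
Proof.
  pose proof h_small. pose proof PI_bounds.
  destruct (RI_rsum (fun i x => Defs.ind (lf i) * (Defs.ind (P i x) * isin2 x)) m (R0 - PI) (- (PI / INR n))) as [X E].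
  { intros i Hi. apply (EL_ok i Hi). }
  assert (E' : rsum EL m = RI (fun x => rsum (fun i => Defs.ind (lf i) * (Defs.ind (P i x) * isin2 x)) m) (R0 - PI) (- (PI / INR n)))
    by (rewrite E; reflexivity).
  rewrite E'.
  destruct (RI_isin2 (R0 - PI) (- (PI / INR n))) as [E2 X2]. lra.
  { intros x Hx. assert (sin x < 0) by (apply sin_nz_L; lra). lra. }
  rewrite <- E2. apply RI_le; auto. lra.
  intros x Hx. assert (sin x < 0) by (apply sin_nz_L; lra).
  assert (Hs : 0 <= isin2 x) by (unfold isin2; left; apply Rinv_0_lt_compat; apply pow2_gt_0; lra).
  rewrite (rsum_ext _ (fun i => (Defs.ind (lf i) * Defs.ind (P i x)) * isin2 x)) by (intros; ring).
  rewrite <- rsum_mult_r.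
  assert (rsum (fun i => Defs.ind (lf i) * Defs.ind (P i x)) m <= 1).
  { apply sum_ind_le1. intros; apply (Hdisj i j x); auto. intros i _. destruct (ind_01 (lf i)) as [Z|Z]; rewrite Z; lra. }
  assert (0 <= rsum (fun i => Defs.ind (lf i) * Defs.ind (P i x)) m).
  { apply rsum_nonneg. intros i _. destruct (ind_01 (lf i)) as [Z|Z]; destruct (ind_01 (P i x)) as [Z'|Z']; rewrite Z, Z'; lra. }
  change (/ sin x ^ 2) with (isin2 x). apply Rle_trans with (1 * isin2 x); [apply Rmult_le_compat_r; auto | lra].
Qed.

Lemma cotg_shift x : cotg (x - PI) = cotg x.
Proof. unfold cotg. rewrite cos_minus, sin_minus, cos_PI, sin_PI.
  replace (cos x * -1 + sin x * 0) with (- cos x) by ring.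
  replace (sin x * -1 - cos x * 0) with (- sin x) by ring.
  unfold Rdiv. rewrite Rinv_opp. ring. Qed.

Lemma cotg_neg x : cotg (- x) = - cotg x.
Proof. unfold cotg. rewrite cos_neg, sin_neg. unfold Rdiv. rewrite Rinv_opp. ring. Qed.

Lemma far_one i : (i < m)%nat ->
  Rabs (alpha i * (Defs.ind (far i) * T i)) <= / INR n * (ER i + EL i).
Proof.
  intros Hi. pose proof h_small. pose proof PI_bounds. pose proof Nb.
  destruct (ER_ok i Hi) as [_ [ER0 ER1]]. destruct (EL_ok i Hi) as [_ [EL0 EL1]].
  assert (HN : 0 < / INR n) by (apply Rinv_0_lt_compat; lra).
  rewrite Rabs_mult. replace (Rabs (alpha i)) with 1 by (destruct (Hal i Hi) as [Z|Z]; rewrite Z; unfold Rabs; destruct (Rcase_abs _); lra).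
  rewrite Rmult_1_l.
  destruct (classic (far i)) as [Hf|Hf].
  - rewrite ind_T by auto. rewrite Rmult_1_l.
    destruct Hf as [Hr|Hl].
    + destruct Hr as [Hr1 Hr2]. destruct (dat_ne i Hi Hr2) as [G1 [_ [G3 [_ [Hc [_ HT]]]]]].
      rewrite HT. rewrite ER1 by (split; auto).
      destruct (lobe_far n (A i) (B i)) as [L _]; auto. lia.
      intros x Hx. assert (0 < sin x) by (apply sin_nz_R; lra). lra.
      apply Rle_trans with (1 := L). apply Rmult_le_compat_l. lra. unfold isin2. lra.
    + destruct Hl as [Hl1 Hl2]. destruct (dat_ne i Hi Hl1) as [G1 [_ [G3 [_ [Hc [_ HT]]]]]].
      rewrite HT. rewrite EL1 by (split; auto).
      destruct (lobe_far n (A i) (B i)) as [L _]; auto. lia.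
      intros x Hx. assert (sin x < 0) by (apply sin_nz_L; lra). lra.
      apply Rle_trans with (1 := L). apply Rmult_le_compat_l. lra. unfold isin2. lra.
  - rewrite ind_F by auto. rewrite Rmult_0_l, Rabs_R0. apply Rmult_le_pos; lra.
Qed.

Lemma far_total : rsum (fun i => Rabs (alpha i * (Defs.ind (far i) * T i))) m <= 2 * (/ INR n * / sin (PI / INR n)).
Proof.
  pose proof h_small. pose proof PI_bounds. pose proof Nb.
  apply Rle_trans with (rsum (fun i => / INR n * (ER i + EL i)) m).
  apply rsum_le. intros; apply far_one; auto.
  rewrite rsum_scal, rsum_plus.
  pose proof sumER. pose proof sumEL. rewrite cotg_shift, cotg_neg in H3.
  assert (Hs : 0 < sin (PI / INR n)) by (apply sin_gt_0; lra).
  assert (cotg (PI / INR n) <= / sin (PI / INR n)).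
  { unfold cotg. unfold Rdiv. rewrite <- (Rmult_1_l (/ sin (PI / INR n))) at 2. apply Rmult_le_compat_r.
    left; apply Rinv_0_lt_compat; auto. apply COS_bound. }
  assert (HN : 0 < / INR n) by (apply Rinv_0_lt_compat; lra).
  apply Rle_trans with (/ INR n * (2 * / sin (PI / INR n))).
  apply Rmult_le_compat_l. lra. lra. lra.
Qed.

Lemma k2_even x : k2 n (- x) = k2 n x.
Proof. unfold k2. rewrite Dk_even. reflexivity. Qed.
Lemma RI_k2_neg a b : RI (k2 n) a b = RI (k2 n) (- b) (- a).
Proof.
  pose proof (RI_refl (k2 n) 0 (- b) (- a) (EX_k2 n _ _)) as E.
  replace (0 - - a) with a in E by ring. replace (0 - - b) with b in E by ring.
  rewrite <- E. apply RI_ext. intros. replace (0 - x) with (- x) by ring. apply k2_even.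
Qed.

Lemma seven_h : 7 * (PI / INR n) <= PI / 2.
Proof. pose proof Nb. pose proof PI_bounds. apply Rmult_le_reg_r with (INR n). lra.
  replace (7 * (PI / INR n) * INR n) with (7 * PI) by (field; lra). nra. Qed.

Lemma T_own i : (i < m)%nat -> own i -> Smin n <= T i <= 2 * Smax n.
Proof.
  intros Hi [Ha Hb]. pose proof h_small. pose proof seven_h. pose proof PI_bounds.
  destruct (dat_ne i Hi ltac:(lra)) as [G1 [_ [G3 [[L1 L2] [_ [_ HT]]]]]].
  rewrite HT. rewrite <- (RI_chasles (k2 n) (A i) 0 (B i)) by apply EX_k2.
  rewrite (RI_k2_neg (A i) 0). replace (- 0) with 0 by ring.
  change (RI (k2 n) 0 (- A i)) with (Phi n (- A i)). change (RI (k2 n) 0 (B i)) with (Phi n (B i)).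
  assert (R1 : 0 <= Phi n (- A i) <= Smax n) by (apply Phi_range; auto; lra).
  assert (R2 : 0 <= Phi n (B i) <= Smax n) by (apply Phi_range; auto; lra).
  split; [|lra].
  assert (PI / (2 * INR n) = (PI / INR n) / 2) by (field; pose proof Nb; lra).
  destruct (Rle_dec (PI / (2 * INR n)) (B i)).
  - assert (Smin n <= Phi n (B i)) by (apply Phi_big; auto; lra). lra.
  - assert (Smin n <= Phi n (- A i)) by (apply Phi_big; auto; lra). lra.
Qed.

Lemma T_nR i : (i < m)%nat -> nR i -> Rabs (T i) <= Smax n.
Proof.
  intros Hi [Ha [Ha' Hab]]. pose proof h_small. pose proof seven_h. pose proof PI_bounds.
  destruct (dat_ne i Hi Hab) as [G1 [_ [G3 [[L1 L2] [_ [_ HT]]]]]].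
  rewrite HT. pose proof (Phi_split n (A i) (B i)) as E.
  assert (R1 : 0 <= Phi n (A i) <= Smax n) by (apply Phi_range; auto; lra).
  assert (R2 : 0 <= Phi n (B i) <= Smax n) by (apply Phi_range; auto; lra).
  apply Rabs_le. lra.
Qed.

Lemma T_nL i : (i < m)%nat -> nL i -> Rabs (T i) <= Smax n.
Proof.
  intros Hi [Hab [Hb Hb']]. pose proof h_small. pose proof seven_h. pose proof PI_bounds.
  destruct (dat_ne i Hi Hab) as [G1 [_ [G3 [[L1 L2] [_ [_ HT]]]]]].
  rewrite HT, RI_k2_neg. pose proof (Phi_split n (- B i) (- A i)) as E.
  assert (R1 : 0 <= Phi n (- A i) <= Smax n) by (apply Phi_range; auto; lra).
  assert (R2 : 0 <= Phi n (- B i) <= Smax n) by (apply Phi_range; auto; lra).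
  apply Rabs_le. lra.
Qed.

Lemma abs_lt_h x y : 0 < x < PI / INR n -> 0 < y < PI / INR n -> PI / INR n <= Rabs (x - y) -> False.
Proof. intros. unfold Rabs in H1. destruct (Rcase_abs (x - y)); lra. Qed.

Lemma own_unique i j : (i < m)%nat -> (j < m)%nat -> own i -> own j -> i = j.
Proof.
  intros Hi Hj Oi Oj. destruct (Nat.eq_dec i j) as [|Hne]; auto. exfalso.
  apply (Hdisj i j 0); auto; apply dat_P; auto; unfold own in *; lra.
Qed.
Lemma nR_unique i j : (i < m)%nat -> (j < m)%nat -> nR i -> nR j -> i = j.
Proof.
  intros Hi Hj Oi Oj. destruct (Nat.eq_dec i j) as [|Hne]; auto. exfalso. unfold nR in *.
  apply (abs_lt_h (A i) (A j)); try lra.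
  apply (Hsep i j); auto; apply dat_P; auto; lra.
Qed.
Lemma nL_unique i j : (i < m)%nat -> (j < m)%nat -> nL i -> nL j -> i = j.
Proof.
  intros Hi Hj Oi Oj. destruct (Nat.eq_dec i j) as [|Hne]; auto. exfalso. unfold nL in *.
  apply (abs_lt_h (- B i) (- B j)); try lra.
  replace (- B i - - B j) with (- (B i - B j)) by ring. rewrite Rabs_Ropp.
  apply (Hsep i j); auto; apply dat_P; auto; lra.
Qed.
Lemma own_nR i j : (i < m)%nat -> (j < m)%nat -> own i -> nR j -> False.
Proof.
  intros Hi Hj Oi Oj. unfold own, nR in *. destruct (Nat.eq_dec i j) as [E|Hne]. subst; lra.
  pose proof (Hsep i j 0 (A j) Hi Hj Hne ltac:(apply dat_P; auto; lra) ltac:(apply dat_P; auto; lra)).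
  replace (0 - A j) with (- A j) in H by ring. rewrite Rabs_Ropp, Rabs_right in H by lra. lra.
Qed.
Lemma own_nL i j : (i < m)%nat -> (j < m)%nat -> own i -> nL j -> False.
Proof.
  intros Hi Hj Oi Oj. unfold own, nL in *. destruct (Nat.eq_dec i j) as [E|Hne]. subst; lra.
  pose proof (Hsep i j 0 (B j) Hi Hj Hne ltac:(apply dat_P; auto; lra) ltac:(apply dat_P; auto; lra)).
  replace (0 - B j) with (- B j) in H by ring. rewrite Rabs_right in H by lra. lra.
Qed.

Lemma decomp i : (i < m)%nat ->
  T i = Defs.ind (own i) * T i + Defs.ind (far i) * T i + Defs.ind (nR i) * T i + Defs.ind (nL i) * T i.
Proof.
  intros Hi. pose proof h_small.
  destruct (Hdat i Hi) as [[_ [HT _]]|[_ [Hab _]]].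
  - rewrite HT. ring.
  - unfold own, far, rf, lf, nR, nL.
    destruct (Rle_dec (A i) 0); [destruct (Rle_dec 0 (B i))|].
    + rewrite ind_T by lra. rewrite (ind_F (_ \/ _)) by lra. rewrite (ind_F (0 < A i /\ _)) by lra.
      rewrite (ind_F (A i <= B i /\ _)) by lra. ring.
    + rewrite ind_F by lra. rewrite (ind_F (0 < A i /\ _)) by lra.
      destruct (Rle_dec (B i) (- (PI / INR n))).
      * rewrite (ind_T (_ \/ _)) by lra. rewrite (ind_F (A i <= B i /\ - _ < _ /\ _)) by lra. ring.
      * rewrite (ind_F (_ \/ _)) by lra. rewrite (ind_T (A i <= B i /\ - _ < _ /\ _)) by lra. ring.
    + rewrite ind_F by lra. rewrite (ind_F (A i <= B i /\ - _ < _ /\ _)) by lra.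
      destruct (Rle_dec (PI / INR n) (A i)).
      * rewrite (ind_T (_ \/ _)) by lra. rewrite (ind_F (0 < A i /\ _)) by lra. ring.
      * rewrite (ind_F (_ \/ _)) by lra. rewrite (ind_T (0 < A i /\ _)) by lra. ring.
Qed.

Definition SS := rsum (fun i => alpha i * T i) m.
Definition FB := 2 * (/ INR n * / sin (PI / INR n)).

Lemma S_decomp : SS = rsum (fun i => alpha i * (Defs.ind (own i) * T i)) m + rsum (fun i => alpha i * (Defs.ind (far i) * T i)) m
  + rsum (fun i => alpha i * (Defs.ind (nR i) * T i)) m + rsum (fun i => alpha i * (Defs.ind (nL i) * T i)) m.
Proof.
  unfold SS. rewrite <- !rsum_plus. apply rsum_ext. intros i Hi. rewrite (decomp i Hi) at 1. ring.
Qed.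

Lemma abs_alpha i : (i < m)%nat -> Rabs (alpha i) = 1.
Proof. intros Hi. destruct (Hal i Hi) as [Z|Z]; rewrite Z; unfold Rabs; destruct (Rcase_abs _); lra. Qed.

Lemma near_sum (Q : nat -> Prop) : (forall i j, (i < m)%nat -> (j < m)%nat -> Q i -> Q j -> i = j) ->
  (forall i, (i < m)%nat -> Q i -> Rabs (T i) <= Smax n) ->
  Rabs (rsum (fun i => alpha i * (Defs.ind (Q i) * T i)) m) <= Smax n.
Proof.
  intros Hu Hb. pose proof (Phi_range n 0 Hn ltac:(pose proof PI_bounds; lra)).
  eapply Rle_trans. apply rsum_abs.
  apply (rsum_unique_le Q). lra. auto.
  intros i Hi nQ. rewrite ind_F by auto. rewrite Rmult_0_l, Rmult_0_r. apply Rabs_R0.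
  intros i Hi Qi. rewrite ind_T by auto. rewrite Rmult_1_l, Rabs_mult, abs_alpha, Rmult_1_l by auto. auto.
Qed.

Lemma far_sum : Rabs (rsum (fun i => alpha i * (Defs.ind (far i) * T i)) m) <= FB.
Proof. eapply Rle_trans. apply rsum_abs. apply far_total. Qed.

Lemma final_upper : Rabs SS <= 2 * Smax n + FB.
Proof.
  rewrite S_decomp. pose proof far_sum.
  destruct (classic (exists i0, (i0 < m)%nat /\ own i0)) as [[i0 [Hi0 O0]]|NO].
  - rewrite (rsum_single _ m i0 Hi0).
    2: { intros i Hi Hne. rewrite ind_F. ring. intro Oi. apply Hne. apply own_unique; auto. }
    rewrite (rsum_zero (fun i => alpha i * (Defs.ind (nR i) * T i))).
    2: { intros i Hi. rewrite ind_F. ring. intro. apply (own_nR i0 i); auto. }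
    rewrite (rsum_zero (fun i => alpha i * (Defs.ind (nL i) * T i))).
    2: { intros i Hi. rewrite ind_F. ring. intro. apply (own_nL i0 i); auto. }
    rewrite ind_T by auto. pose proof (T_own i0 Hi0 O0).
    rewrite !Rplus_0_r. eapply Rle_trans. apply Rabs_triang.
    rewrite Rmult_1_l, Rabs_mult, abs_alpha by auto. rewrite Rabs_right by (pose proof (Smin_bound n Hn); lra). lra.
  - rewrite (rsum_zero (fun i => alpha i * (Defs.ind (own i) * T i))).
    2: { intros i Hi. rewrite ind_F. ring. intro. apply NO. exists i; auto. }
    pose proof (near_sum nR nR_unique T_nR). pose proof (near_sum nL nL_unique T_nL).
    rewrite Rplus_0_l.
    set (X1 := rsum (fun i => alpha i * (Defs.ind (far i) * T i)) m) in *.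
    set (X2 := rsum (fun i => alpha i * (Defs.ind (nR i) * T i)) m) in *.
    set (X3 := rsum (fun i => alpha i * (Defs.ind (nL i) * T i)) m) in *.
    apply Rle_trans with (Rabs X1 + Rabs X2 + Rabs X3).
    { eapply Rle_trans. apply Rabs_triang. apply Rplus_le_compat_r. apply Rabs_triang. }
    lra.
Qed.

Lemma final_lower i0 : (i0 < m)%nat -> P i0 0 -> Smin n - FB <= Rabs SS.
Proof.
  intros Hi0 P0. pose proof h_small. pose proof PI_bounds.
  assert (O0 : own i0).
  { destruct (Hdat i0 Hi0) as [[_ [_ E]]|[_ [_ [_ [_ [_ [E _]]]]]]].
    - exfalso. apply (E 0); auto. lra.
    - apply E in P0; [unfold own; lra | lra]. }
  rewrite S_decomp. pose proof far_sum.
  rewrite (rsum_single _ m i0 Hi0).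
  2: { intros i Hi Hne. rewrite ind_F. ring. intro Oi. apply Hne. apply own_unique; auto. }
  rewrite (rsum_zero (fun i => alpha i * (Defs.ind (nR i) * T i))).
  2: { intros i Hi. rewrite ind_F. ring. intro. apply (own_nR i0 i); auto. }
  rewrite (rsum_zero (fun i => alpha i * (Defs.ind (nL i) * T i))).
  2: { intros i Hi. rewrite ind_F. ring. intro. apply (own_nL i0 i); auto. }
  rewrite ind_T by auto. pose proof (T_own i0 Hi0 O0).
  rewrite !Rplus_0_r. rewrite Rmult_1_l.
  assert (Rabs (alpha i0 * T i0) = T i0).
  { rewrite Rabs_mult, abs_alpha by auto. rewrite Rabs_right. ring. pose proof (Smin_bound n Hn); lra. }
  pose proof (Rabs_triang_inv (alpha i0 * T i0) (- rsum (fun i => alpha i * (Defs.ind (far i) * T i)) m)) as TI.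
  replace (alpha i0 * T i0 - - rsum (fun i => alpha i * (Defs.ind (far i) * T i)) m) with
    (alpha i0 * T i0 + rsum (fun i => alpha i * (Defs.ind (far i) * T i)) m) in TI by ring.
  rewrite Rabs_Ropp in TI. lra.
Qed.

End Bound.


Definition Dat (n : nat) (T A B : R) (P : R -> Prop) (R0 : R) : Prop :=
  (B < A /\ T = 0 /\ forall x, R0 - PI <= x <= R0 -> ~ P x) \/
  (R0 - PI < A /\ A <= B /\ B < R0 /\ PI / INR n <= B - A <= 6 * PI / INR n /\
   cos (2 * INR n * A) = cos (2 * INR n * B) /\
   (forall x, R0 - PI <= x <= R0 -> (P x <-> A <= x <= B)) /\ T = RI (k2 n) A B).

Lemma choose_q th : exists q : Z, PI / 4 <= th - IZR q * PI / 2 <= 3 * PI / 4.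
Proof.
  pose proof PI_RGT_0.
  set (r := (th - PI / 4) / (PI / 2)).
  destruct (archimed r) as [H1 H2].
  exists (up r - 1)%Z. rewrite minus_IZR. change (IZR 1) with 1.
  assert (E : th = r * (PI / 2) + PI / 4) by (unfold r; field; lra).
  rewrite E. split.
  - assert ((IZR (up r) - 1) * PI / 2 <= r * (PI / 2)).
    { replace ((IZR (up r) - 1) * PI / 2) with ((IZR (up r) - 1) * (PI / 2)) by field.
      apply Rmult_le_compat_r; lra. }
    lra.
  - assert (r * (PI / 2) - PI / 2 <= (IZR (up r) - 1) * PI / 2).
    { replace ((IZR (up r) - 1) * PI / 2) with ((IZR (up r) - 1) * (PI / 2)) by field.
      replace (r * (PI / 2) - PI / 2) with ((r - 1) * (PI / 2)) by field.
      apply Rmult_le_compat_r; lra. }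
    lra.
Qed.

Lemma setup n t m lo hi alpha th : (100 <= n)%nat -> well_separated n t m lo hi ->
  symmetric_colouring n m lo hi alpha ->
  exists R0 (T A B : nat -> R), PI / 4 <= R0 <= 3 * PI / 4 /\
    (forall i, (i < m)%nat -> Dat n (T i) (A i) (B i) (fun x => Ival n lo hi i (th - x)) R0) /\
    s_hat n m lo hi alpha th = K * sqrt (INR n) * SS m alpha T.
Proof.
  intros Hn Hws Hsym.
  destruct (choose_q th) as [q Hq].
  set (p := IZR q * PI / 2).
  set (T := fun i => 2 * Ui n lo hi th p i).
  assert (HD : forall i, exists ab : R * R, (i < m)%nat -> Dat n (T i) (fst ab) (snd ab) (fun x => Ival n lo hi i (th - x)) (th - p)).
  { intros i. destruct (lt_dec i m) as [Hi|Hi]; [|exists (0, 0); intros; contradiction].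
    destruct (idata n t m lo hi Hn Hws th q i Hi) as [[E1 E2]|[a [b [H1 [H2 [H3 [H4 [H5 [H6 H7]]]]]]]]].
    - exists (1, 0). intros _. left. simpl. split. lra. split. unfold T. fold p in E1. rewrite E1. ring. auto.
    - exists (a, b). intros _. right. simpl. fold p in H1, H3, H6, H7. destruct (W_iv n t m lo hi Hws i Hi) as [L _].
      pose proof (W_len n t m lo hi Hws i Hi).
      assert (HN : 0 < INR n) by (apply lt_0_INR; lia).
      assert (1 <= IZR (hi i - lo i)) by (apply IZR_le; lia).
      split; [auto|]. split; [auto|]. split; [auto|]. split.
      { split.
        - rewrite H4. apply Rmult_le_reg_r with (INR n); auto.
          replace (PI / INR n * INR n) with PI by (field; lra).
          replace (IZR (hi i - lo i) * PI / INR n * INR n) with (IZR (hi i - lo i) * PI) by (field; lra).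
          pose proof PI_RGT_0. nra.
        - rewrite H4; auto. }
      split; [auto|]. split; [auto|].
      unfold T. auto. }
  set (A := fun i => fst (proj1_sig (constructive_indefinite_description _ (HD i)))).
  set (B := fun i => snd (proj1_sig (constructive_indefinite_description _ (HD i)))).
  exists (th - p), T, A, B. split. unfold p; auto. split.
  - intros i Hi. unfold A, B. destruct (constructive_indefinite_description _ (HD i)) as [ab Hab]. simpl. auto.
  - rewrite (shat_main n t m lo hi alpha Hn Hws Hsym th q). rewrite (FF_decomp n t m lo hi alpha Hn Hws th q).
    fold p. unfold SS, T. f_equal. rewrite <- rsum_scal. apply rsum_ext. intros; ring.
Qed.

Theorem lemma5p6 :
  exists n0 : nat, forall n : nat, (n0 <= n)%nat -> (0 < n)%nat ->
  forall t : Z, Z.odd t = true ->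
    powerRZ 2 (-43) < gamma n t -> gamma n t <= powerRZ 2 (-40) ->
  forall (m : nat) (lo hi : nat -> Z) (alpha : nat -> R),
    well_separated n t m lo hi ->
    symmetric_colouring n m lo hi alpha ->
    (forall l, (l < n)%nat -> Rabs (eps_hat n m lo hi alpha (2 * l + 1)) <= 1) ->
    (forall i th, (i < m)%nat -> Ival n lo hi i th ->
       2 * K * sqrt (INR n) / 3 <= Rabs (s_hat n m lo hi alpha th)) /\
    (forall th, Rabs (s_hat n m lo hi alpha th) <= 5 * K * sqrt (INR n)).
Proof.
  exists 100%nat. intros n Hn _ t _ _ _ m lo hi alpha Hws Hsym _.
  assert (HN : 100 <= INR n) by (replace 100 with (INR 100) by (rewrite INR_IZR_INZ; reflexivity); apply le_INR; lia).
  assert (HK : 0 < K * sqrt (INR n)).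
  { apply Rmult_lt_0_compat. unfold K. apply pow_lt. lra. apply sqrt_lt_R0. lra. }
  pose proof (inv_N_sin n Hn) as IS. pose proof (small_terms n Hn) as ST.
  pose proof (Smax_bound n Hn) as SM. pose proof (Smin_bound n Hn) as SN.
  pose proof PI_bounds as PB. pose proof inv_pi as IP.
  assert (FBb : FB n <= 0.6371). { unfold FB. lra. }
  assert (Hdisj : forall th i j x, (i < m)%nat -> (j < m)%nat -> i <> j ->
     (fun i x => Ival n lo hi i (th - x)) i x -> (fun i x => Ival n lo hi i (th - x)) j x -> False).
  { intros th i j x Hi Hj Hne Pi Pj. apply (W_disj n t m lo hi Hws i j (th - x)); auto. }
  assert (Hsep : forall th i j x y, (i < m)%nat -> (j < m)%nat -> i <> j ->
     (fun i x => Ival n lo hi i (th - x)) i x -> (fun i x => Ival n lo hi i (th - x)) j y -> PI / INR n <= Rabs (x - y)).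
  { intros th i j x y Hi Hj Hne Pi Pj. pose proof (W_sep n t m lo hi Hws i j (th - x) (th - y) Hi Hj Hne Pi Pj).
    replace (th - x - (th - y)) with (- (x - y)) in H by ring. rewrite Rabs_Ropp in H. auto. }
  split.
  - intros i0 th Hi0 Hth.
    destruct (setup n t m lo hi alpha th Hn Hws Hsym) as [R0 [T [A [B [HR [HD HS]]]]]].
    pose proof (final_lower n m alpha T A B (fun i x => Ival n lo hi i (th - x)) R0 Hn HR
      (S_col n m lo hi alpha Hsym) HD (Hdisj th) (Hsep th) i0 Hi0) as L.
    rewrite HS, Rabs_mult, (Rabs_right (K * sqrt (INR n))) by lra.
    assert (2 / 3 <= Rabs (SS m alpha T)).
    { apply Rle_trans with (Smin n - FB n); [lra|]. apply L. simpl. replace (th - 0) with th by ring. auto. }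
    replace (2 * K * sqrt (INR n) / 3) with (K * sqrt (INR n) * (2 / 3)) by field.
    apply Rmult_le_compat_l; lra.
  - intros th.
    destruct (setup n t m lo hi alpha th Hn Hws Hsym) as [R0 [T [A [B [HR [HD HS]]]]]].
    pose proof (final_upper n m alpha T A B (fun i x => Ival n lo hi i (th - x)) R0 Hn HR
      (S_col n m lo hi alpha Hsym) HD (Hdisj th) (Hsep th)) as U.
    rewrite HS, Rabs_mult, (Rabs_right (K * sqrt (INR n))) by lra.
    replace (5 * K * sqrt (INR n)) with (K * sqrt (INR n) * 5) by ring.
    apply Rmult_le_compat_l; lra.
Qed.
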